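(* Let $X$ be a real Hilbert space, let $\mu\ge\omega\ge0$ and $\beta>0$. Let $f\colon X\to\mathbb{R}$ be $\mu$-strongly convex and Fréchet differentiable with $\beta$-Lipschitz continuous gradient, and let $g\colon X\to\left]-\infty,+\infty\right]$ be proper, lower semicontinuous and $\omega$-hypoconvex. Suppose $\operatorname{argmin}(f+g)\neq\varnothing$. Let $\gamma\in\left]0,\frac2{\beta+2\mu}\right[$, set $\delta=\frac{1-\gamma\mu}{1-\gamma\omega}$ and $T=\operatorname{prox}_{\gamma g}(\mathrm{Id}-\gamma\nabla f)$, and let $x_0\in X$. Then $\operatorname{Fix}T=\operatorname{argmin}(f+g)$ and there exists $\bar x\in\operatorname{argmin}(f+g)$ with $T^nx_0\rightharpoonup\bar x$. If moreover $\mu>\omega$, then $\operatorname{argmin}(f+g)=\{\bar x\}$ and $T^nx_0\to\bar x$ with linear rate $\delta<1$.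
   Context: $g$ is $\omega$-hypoconvex if $g+\tfrac\omega2\|\cdot\|^2$ is convex. For $\gamma>0$ with $\gamma\omega<1$, $\operatorname{prox}_{\gamma g}(x)=\operatorname{argmin}_{y\in X}\big(g(y)+\tfrac1{2\gamma}\|x-y\|^2\big)$, which is single-valued with full domain. $f$ is $\mu$-strongly convex if $f-\tfrac\mu2\|\cdot\|^2$ is convex. *)

(* Defs.v *)
From Stdlib Require Import Reals Lra ClassicalEpsilon.
Open Scope R_scope.

Record Hilbert := {
  hcar :> Type;
  hzero : hcar;
  hadd : hcar -> hcar -> hcar;
  hopp : hcar -> hcar;
  hscal : R -> hcar -> hcar;
  hinner : hcar -> hcar -> R;
  hadd_assoc : forall x y z, hadd x (hadd y z) = hadd (hadd x y) z;
  hadd_comm : forall x y, hadd x y = hadd y x;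
  hadd_zero : forall x, hadd x hzero = x;
  hadd_opp : forall x, hadd x (hopp x) = hzero;
  hscal_one : forall x, hscal 1 x = x;
  hscal_assoc : forall a b x, hscal a (hscal b x) = hscal (a * b) x;
  hscal_distr_l : forall a x y, hscal a (hadd x y) = hadd (hscal a x) (hscal a y);
  hscal_distr_r : forall a b x, hscal (a + b) x = hadd (hscal a x) (hscal b x);
  hinner_sym : forall x y, hinner x y = hinner y x;
  hinner_add_l : forall x y z, hinner (hadd x y) z = hinner x z + hinner y z;
  hinner_scal_l : forall a x y, hinner (hscal a x) y = a * hinner x y;
  hinner_pos : forall x, 0 <= hinner x x;
  hinner_def : forall x, hinner x x = 0 -> x = hzero;
  hcomplete : forall u : nat -> hcar,
    (forall eps, 0 < eps -> exists N, forall m n, (N <= m)%nat -> (N <= n)%nat ->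
        sqrt (hinner (hadd (u m) (hopp (u n))) (hadd (u m) (hopp (u n)))) < eps) ->
    exists l, forall eps, 0 < eps -> exists N, forall n, (N <= n)%nat ->
        sqrt (hinner (hadd (u n) (hopp l)) (hadd (u n) (hopp l))) < eps
}.

Arguments hzero {h}.
Arguments hadd {h}.
Arguments hopp {h}.
Arguments hscal {h}.
Arguments hinner {h}.

Definition hsub {X : Hilbert} (x y : X) : X := hadd x (hopp y).
Definition hnorm {X : Hilbert} (x : X) : R := sqrt (hinner x x).

Inductive ERext := Fin (r : R) | Pinfty.

Definition eplus (a : ERext) (c : R) : ERext :=
  match a with Fin r => Fin (r + c) | Pinfty => Pinfty end.
Definition ele (a b : ERext) : Prop :=
  match a, b with
  | _, Pinfty => True
  | Fin x, Fin y => x <= y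
  | Pinfty, Fin _ => False
  end.
Definition elt (a b : ERext) : Prop :=
  match a, b with
  | Fin x, Pinfty => True
  | Fin x, Fin y => x < y
  | Pinfty, _ => False
  end.

Definition in_dom {X : Hilbert} (g : X -> ERext) (x : X) : Prop :=
  exists r, g x = Fin r.

Definition proper_fun {X : Hilbert} (g : X -> ERext) : Prop :=
  exists x, in_dom g x.

Definition lsc {X : Hilbert} (g : X -> ERext) : Prop :=
  forall x c, elt (Fin c) (g x) ->
    exists eps, 0 < eps /\ forall y, hnorm (hsub y x) < eps -> elt (Fin c) (g y).

Definition convex_ext {X : Hilbert} (h : X -> ERext) : Prop :=
  forall x y t, 0 <= t <= 1 ->
    ele (h (hadd (hscal t x) (hscal (1 - t) y)))
        (match h x, h y with
         | Fin a, Fin b => Fin (t * a + (1 - t) * b)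
         | _, _ => Pinfty end).

Definition convex_real {X : Hilbert} (h : X -> R) : Prop :=
  forall x y t, 0 <= t <= 1 ->
    h (hadd (hscal t x) (hscal (1 - t) y)) <= t * h x + (1 - t) * h y.

Definition hypoconvex {X : Hilbert} (omega : R) (g : X -> ERext) : Prop :=
  convex_ext (fun x => eplus (g x) (omega / 2 * hnorm x ^ 2)).

Definition strongly_convex {X : Hilbert} (mu : R) (f : X -> R) : Prop :=
  convex_real (fun x => f x - mu / 2 * hnorm x ^ 2).

Definition is_frechet_gradient {X : Hilbert} (f : X -> R) (gradf : X -> X) : Prop :=
  forall x eps, 0 < eps -> exists d, 0 < d /\ forall h : X, hnorm h < d ->
    Rabs (f (hadd x h) - f x - hinner (gradf x) h) <= eps * hnorm h.

Definition lipschitz {X : Hilbert} (beta : R) (F : X -> X) : Prop :=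
  forall x y, hnorm (hsub (F x) (F y)) <= beta * hnorm (hsub x y).

Definition is_argmin_sum {X : Hilbert} (f : X -> R) (g : X -> ERext) (x : X) : Prop :=
  in_dom g x /\ forall y, ele (eplus (g x) (f x)) (eplus (g y) (f y)).

Definition is_prox_point {X : Hilbert} (gamma : R) (g : X -> ERext) (x p : X) : Prop :=
  is_argmin_sum (fun y => / (2 * gamma) * hnorm (hsub x y) ^ 2) g p.

(** prox_{gamma g}(x): the minimizer (unique when gamma*omega < 1, see paper) *)
Definition prox {X : Hilbert} (gamma : R) (g : X -> ERext) (x : X) : X :=
  epsilon (inhabits hzero) (fun p => is_prox_point gamma g x p).

Definition fb_op {X : Hilbert} (gamma : R) (g : X -> ERext) (gradf : X -> X) (x : X) : X :=
  prox gamma g (hsub x (hscal gamma (gradf x))).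

Definition weak_cv {X : Hilbert} (u : nat -> X) (l : X) : Prop :=
  forall y : X, Un_cv (fun n => hinner (u n) y) (hinner l y).

Definition strong_cv {X : Hilbert} (u : nat -> X) (l : X) : Prop :=
  Un_cv (fun n => hnorm (hsub (u n) l)) 0.

(* Main.v *)
Require Import Defs.
From Stdlib Require Import Reals Lra Psatz ClassicalEpsilon Classical Lia.
Open Scope R_scope.

Lemma ip_zero_l {X : Hilbert} (y : X) : hinner hzero y = 0.
Proof.
  assert (H := hinner_add_l X hzero hzero y). rewrite hadd_zero in H. lra.
Qed.

Lemma ip_opp_l {X : Hilbert} (x y : X) : hinner (hopp x) y = - hinner x y.
Proof.
  assert (H := hinner_add_l X x (hopp x) y). rewrite hadd_opp, ip_zero_l in H. lra.
Qed.

Lemma ip_add_r {X : Hilbert} (x y z : X) : hinner x (hadd y z) = hinner x y + hinner x z.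
Proof. rewrite hinner_sym, hinner_add_l, (hinner_sym X y), (hinner_sym X z). reflexivity. Qed.

Lemma ip_scal_r {X : Hilbert} a (x y : X) : hinner x (hscal a y) = a * hinner x y.
Proof. rewrite hinner_sym, hinner_scal_l, (hinner_sym X y). reflexivity. Qed.

Lemma ip_opp_r {X : Hilbert} (x y : X) : hinner x (hopp y) = - hinner x y.
Proof. rewrite hinner_sym, ip_opp_l, (hinner_sym X y). reflexivity. Qed.

Lemma ip_zero_r {X : Hilbert} (y : X) : hinner y hzero = 0.
Proof. rewrite hinner_sym. apply ip_zero_l. Qed.

Lemma ip_sub_l {X : Hilbert} (x y z : X) : hinner (hsub x y) z = hinner x z - hinner y z.
Proof. unfold hsub. rewrite hinner_add_l, ip_opp_l. ring. Qed.

Lemma ip_sub_r {X : Hilbert} (x y z : X) : hinner z (hsub x y) = hinner z x - hinner z y.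
Proof. unfold hsub. rewrite ip_add_r, ip_opp_r. ring. Qed.

Ltac ipexp := repeat (rewrite ?ip_sub_l, ?ip_sub_r, ?hinner_add_l, ?ip_add_r,
   ?hinner_scal_l, ?ip_scal_r, ?ip_opp_l, ?ip_opp_r, ?ip_zero_l, ?ip_zero_r).
Ltac ipexp_in H := repeat (rewrite ?ip_sub_l, ?ip_sub_r, ?hinner_add_l, ?ip_add_r,
   ?hinner_scal_l, ?ip_scal_r, ?ip_opp_l, ?ip_opp_r, ?ip_zero_l, ?ip_zero_r in H).

Lemma sub_zero_eq {X : Hilbert} (x y : X) : hsub x y = hzero -> x = y.
Proof.
  unfold hsub; intro H.
  rewrite <- (hadd_zero X x), <- (hadd_opp X y), (hadd_comm X y), hadd_assoc, H,
    hadd_comm, hadd_zero. reflexivity.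
Qed.

Lemma hext {X : Hilbert} (x y : X) : (forall w, hinner x w = hinner y w) -> x = y.
Proof.
  intro H. apply sub_zero_eq, hinner_def. rewrite ip_sub_l, !H. ring.
Qed.

Lemma ip_self_eq0 {X : Hilbert} (x y : X) : hinner (hsub x y) (hsub x y) = 0 -> x = y.
Proof. intro H. apply sub_zero_eq, hinner_def, H. Qed.

Lemma nsq {X : Hilbert} (x : X) : hnorm x ^ 2 = hinner x x.
Proof. unfold hnorm. rewrite pow2_sqrt; [reflexivity| apply hinner_pos]. Qed.

Lemma hnorm_pos {X : Hilbert} (x : X) : 0 <= hnorm x.
Proof. unfold hnorm. apply sqrt_pos. Qed.

Lemma CS2 {X : Hilbert} (x y : X) : hinner x y ^ 2 <= hinner x x * hinner y y.
Proof.
  destruct (Req_dec (hinner y y) 0) as [H0|H0].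
  - apply hinner_def in H0. subst. rewrite !ip_zero_r. simpl. lra.
  - assert (Hp : 0 < hinner y y) by (assert (H:=hinner_pos _ y); lra).
    set (t := hinner x y / hinner y y).
    assert (H := hinner_pos _ (hsub x (hscal t y))).
    ipexp_in H. rewrite (hinner_sym X y x) in H.
    unfold t in H. field_simplify in H; [|lra].
    unfold Rdiv in H; apply Rmult_le_compat_r with (r:=hinner y y) in H; [| lra].
    rewrite Rmult_0_l, Rmult_assoc, Rinv_l, Rmult_1_r in H; lra.
Qed.

Lemma hnorm_sq_le {X : Hilbert} (x : X) (e : R) : 0 <= e -> hinner x x <= e ^ 2 -> hnorm x <= e.
Proof.
  intros He H. unfold hnorm. rewrite <- (sqrt_pow2 e He). apply sqrt_le_1_alt. exact H.
Qed.

Lemma hnorm_sq_lt {X : Hilbert} (x : X) (e : R) : 0 <= e -> hinner x x < e ^ 2 -> hnorm x < e.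
Proof.
  intros He H. unfold hnorm. rewrite <- (sqrt_pow2 e He). apply sqrt_lt_1_alt.
  split; [apply hinner_pos| exact H].
Qed.

Lemma CS {X : Hilbert} (x y : X) : Rabs (hinner x y) <= hnorm x * hnorm y.
Proof.
  unfold hnorm. rewrite <- sqrt_mult by apply hinner_pos.
  rewrite <- sqrt_Rsqr_abs. apply sqrt_le_1_alt. unfold Rsqr.
  assert (H := CS2 x y). simpl in H. lra.
Qed.

Lemma CS1 {X : Hilbert} (x y : X) : hinner x y <= hnorm x * hnorm y.
Proof. eapply Rle_trans; [apply Rle_abs| apply CS]. Qed.

Lemma hnorm_scal {X : Hilbert} t (x : X) : hnorm (hscal t x) = Rabs t * hnorm x.
Proof.
  unfold hnorm. ipexp. replace (t * (t * hinner x x)) with (Rsqr t * hinner x x) by (unfold Rsqr; ring).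
  rewrite sqrt_mult; [| apply Rle_0_sqr| apply hinner_pos].
  rewrite sqrt_Rsqr_abs. reflexivity.
Qed.

Lemma le_eps (a b K : R) : (forall e, 0 < e -> a <= b + e * K) -> a <= b.
Proof.
  intro H. destruct (Rle_dec a b) as [|Hn]; [assumption|].
  exfalso. set (e := (a - b) / (2 * (Rabs K + 1))).
  assert (He : 0 < e). { unfold e. apply Rdiv_lt_0_compat; [lra|]. assert (0 <= Rabs K) by apply Rabs_pos. lra. }
  specialize (H e He).
  assert (e * K <= e * Rabs K) by (apply Rmult_le_compat_l; [lra| apply Rle_abs]).
  assert (e * (Rabs K + 1) = (a - b) / 2). { unfold e. field. assert (0 <= Rabs K) by apply Rabs_pos. lra. }
  nra.
Qed.

Lemma seg_eq {X : Hilbert} (x y : X) t :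
  hadd (hscal t y) (hscal (1 - t) x) = hadd x (hscal t (hsub y x)).
Proof. apply hext; intro w; ipexp; ring. Qed.

Lemma add_sub_l {X : Hilbert} (x h : X) : hsub (hadd x h) x = h.
Proof. apply hext; intro w; ipexp; ring. Qed.

Lemma add_scal_shift {X : Hilbert} (x d : X) t h :
  hadd x (hscal (t + h) d) = hadd (hadd x (hscal t d)) (hscal h d).
Proof. apply hext; intro w; ipexp; ring. Qed.

Lemma abs_le (a b : R) : Rabs a <= b -> - b <= a /\ a <= b.
Proof. unfold Rabs; destruct (Rcase_abs a); intros; lra. Qed.
Lemma abs_le_intro (a b : R) : - b <= a -> a <= b -> Rabs a <= b.
Proof. unfold Rabs; destruct (Rcase_abs a); intros; lra. Qed.

Lemma nsq' {X : Hilbert} (x : X) : hnorm x * (hnorm x * 1) = hinner x x.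
Proof. rewrite <- nsq. simpl. reflexivity. Qed.

Lemma pos_div_le (t Z : R) : 0 < t -> t * Z <= 0 -> Z <= 0.
Proof. intros. nra. Qed.

Lemma SC_ineq {X : Hilbert} mu (f : X -> R) gradf : 0 <= mu -> strongly_convex mu f ->
  is_frechet_gradient f gradf -> forall x y,
  f x + hinner (gradf x) (hsub y x) + mu / 2 * hinner (hsub y x) (hsub y x) <= f y.
Proof.
  intros Hmu Hs Hfr x y.
  assert (Hy : hinner y y = hinner x x + 2 * hinner x (hsub y x) + hinner (hsub y x) (hsub y x)).
  { ipexp. rewrite (hinner_sym X y x). ring. }
  set (d := hsub y x) in *.
  apply le_eps with (K := hnorm d + mu / 2 * hinner d d). intros e He.
  destruct (Hfr x e He) as [dl [Hdl Hh]].
  assert (Hnd := hnorm_pos d).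
  set (t := Rmin (Rmin 1 e) (dl / (2 * (hnorm d + 1)))).
  assert (Ht1 : t <= 1) by (unfold t; repeat (apply Rmin_glb_lt || apply Rmin_glb || idtac);
     eapply Rle_trans; [apply Rmin_l| apply Rmin_l]).
  assert (Hte : t <= e) by (unfold t; eapply Rle_trans; [apply Rmin_l| apply Rmin_r]).
  assert (Ht0 : 0 < t).
  { unfold t. apply Rmin_glb_lt; [apply Rmin_glb_lt; lra|]. apply Rdiv_lt_0_compat; lra. }
  assert (Htd : t * hnorm d < dl).
  { assert (t <= dl / (2 * (hnorm d + 1))) by (unfold t; apply Rmin_r).
    assert (dl / (2 * (hnorm d + 1)) * hnorm d < dl).
    { unfold Rdiv. rewrite Rmult_assoc. 
      assert (/ (2 * (hnorm d + 1)) * hnorm d < 1).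
      { apply Rmult_lt_reg_l with (2 * (hnorm d + 1)); [lra|].
        rewrite <- Rmult_assoc, Rinv_r by lra. lra. }
      nra. }
    nra. }
  clearbody t.
  unfold strongly_convex, convex_real in Hs. assert (Hsc := Hs y x t (conj (Rlt_le _ _ Ht0) Ht1)). cbv beta in Hsc.
  rewrite seg_eq in Hsc. fold d in Hsc. rewrite !nsq in Hsc.
  ipexp_in Hsc. rewrite Hy in Hsc.
  assert (Hn : hnorm (hscal t d) < dl) by (rewrite hnorm_scal, Rabs_pos_eq; lra).
  specialize (Hh (hscal t d) Hn). rewrite hnorm_scal, (Rabs_pos_eq t), ip_scal_r in Hh by lra.
  apply abs_le in Hh. destruct Hh as [Hh _].
  assert (Hdd : 0 <= hinner d d) by apply hinner_pos.
  assert (Hxd : hinner d x = hinner x d) by apply hinner_sym.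
  rewrite Hxd in Hsc.
  assert (Z : t * (f x + hinner (gradf x) d + mu / 2 * hinner d d - (f y + e * (hnorm d + mu / 2 * hinner d d))) <= 0).
  { assert (0 <= t * (mu * hinner d d) * (e - t)) by (repeat apply Rmult_le_pos; lra). lra. }
  apply pos_div_le in Z; lra.
Qed.

Lemma deriv_line {X : Hilbert} (f : X -> R) gradf : is_frechet_gradient f gradf ->
  forall x d t0, derivable_pt_lim (fun t => f (hadd x (hscal t d))) t0
     (hinner (gradf (hadd x (hscal t0 d))) d).
Proof.
  intros Hfr x d t0 eps Heps.
  assert (Hnd := hnorm_pos d).
  set (x1 := hadd x (hscal t0 d)).
  assert (He' : 0 < eps / (2 * (hnorm d + 1))) by (apply Rdiv_lt_0_compat; lra).
  destruct (Hfr x1 _ He') as [dl [Hdl Hh]].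
  assert (Hp : 0 < dl / (hnorm d + 1)) by (apply Rdiv_lt_0_compat; lra).
  exists (mkposreal _ Hp). simpl. intros h Hh0 Hhd.
  rewrite add_scal_shift. fold x1.
  assert (Hn : hnorm (hscal h d) < dl).
  { rewrite hnorm_scal. apply Rmult_lt_compat_r with (r := hnorm d + 1) in Hhd; [|lra].
    unfold Rdiv in Hhd. rewrite Rmult_assoc, Rinv_l, Rmult_1_r in Hhd by lra.
    assert (0 <= Rabs h) by apply Rabs_pos. nra. }
  specialize (Hh _ Hn). rewrite hnorm_scal, ip_scal_r in Hh.
  assert (Hah : 0 < Rabs h) by (apply Rabs_pos_lt; exact Hh0).
  replace ((f (hadd x1 (hscal h d)) - f x1) / h - hinner (gradf x1) d)
    with ((f (hadd x1 (hscal h d)) - f x1 - h * hinner (gradf x1) d) / h) by (field; exact Hh0).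
  unfold Rdiv. rewrite Rabs_mult, Rabs_inv.
  apply Rle_lt_trans with (eps / (2 * (hnorm d + 1)) * (Rabs h * hnorm d) * / Rabs h).
  { apply Rmult_le_compat_r; [left; apply Rinv_0_lt_compat; lra| exact Hh]. }
  replace (eps / (2 * (hnorm d + 1)) * (Rabs h * hnorm d) * / Rabs h)
     with (eps * (hnorm d / (2 * (hnorm d + 1)))) by (field; lra).
  assert (hnorm d / (2 * (hnorm d + 1)) < 1).
  { apply Rmult_lt_reg_r with (2 * (hnorm d + 1)); [lra|].
    unfold Rdiv; rewrite Rmult_assoc, Rinv_l by lra. lra. }
  nra.
Qed.

Lemma DL_ineq {X : Hilbert} beta (f : X -> R) gradf : 0 <= beta ->
  is_frechet_gradient f gradf -> lipschitz beta gradf -> forall x y,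
  f y <= f x + hinner (gradf x) (hsub y x) + beta / 2 * hinner (hsub y x) (hsub y x).
Proof.
  intros Hb Hfr Hl x y.
  set (d := hsub y x). set (G := hinner (gradf x) d). set (K := beta / 2 * hinner d d).
  set (p := fun t => f (hadd x (hscal t d))).
  set (psi := fun t => p t - (G * t + K * (t * t))).
  set (lp := fun t => hinner (gradf (hadd x (hscal t d))) d - (G * 1 + K * (1 * t + t * 1))).
  assert (Hd : forall t, derivable_pt_lim psi t (lp t)).
  { intro t. apply (derivable_pt_lim_minus p (fun t => G * t + K * (t * t))).
    - apply deriv_line, Hfr.
    - apply (derivable_pt_lim_plus (mult_real_fct G id) (mult_real_fct K (mult_fct id id))).
      + apply derivable_pt_lim_scal, derivable_pt_lim_id.
      + apply derivable_pt_lim_scal.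
        apply (derivable_pt_lim_mult id id); apply derivable_pt_lim_id. }
  set (pr := fun t => exist (fun l => derivable_pt_abs psi t l) (lp t) (Hd t) : derivable_pt psi t).
  destruct (MVT_cor1 psi 0 1 pr Rlt_0_1) as [c [Hc Hc01]].
  rewrite (derive_pt_eq_0 psi c (lp c) (pr c) (Hd c)) in Hc.
  assert (Hlp : lp c <= 0).
  { unfold lp. 
    assert (Hlc := Hl (hadd x (hscal c d)) x). rewrite add_sub_l, hnorm_scal, Rabs_pos_eq in Hlc by lra.
    assert (H1 := CS1 (hsub (gradf (hadd x (hscal c d))) (gradf x)) d).
    rewrite ip_sub_l in H1. fold G in H1.
    assert (Hnd := hnorm_pos d).
    assert (H2 : hnorm (hsub (gradf (hadd x (hscal c d))) (gradf x)) * hnorm d <= beta * (c * hnorm d) * hnorm d)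
      by (apply Rmult_le_compat_r; lra).
    assert (E : hinner d d = hnorm d ^ 2) by (rewrite nsq; reflexivity).
    unfold K. rewrite E. nra. }
  assert (E1 : hadd x (hscal 1 d) = y) by (apply hext; intro w; unfold d; ipexp; ring).
  assert (E0 : hadd x (hscal 0 d) = x) by (apply hext; intro w; ipexp; ring).
  unfold psi, p in Hc. rewrite E1, E0 in Hc.
  fold G. fold K. nra.
Qed.

Lemma BH1 {X : Hilbert} (phi : X -> R) (gp : X -> X) beta : 0 < beta ->
  (forall a b, phi a + hinner (gp a) (hsub b a) <= phi b) ->
  (forall a b, phi b <= phi a + hinner (gp a) (hsub b a) + beta / 2 * hinner (hsub b a) (hsub b a)) ->
  forall x y, phi x + hinner (gp x) (hsub y x) +
     hinner (hsub (gp y) (gp x)) (hsub (gp y) (gp x)) / (2 * beta) <= phi y.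
Proof.
  intros Hb Hlo Hup x y.
  set (G := hsub (gp y) (gp x)).
  set (z := hsub y (hscal (/ beta) G)).
  assert (H1 := Hlo x z). assert (H2 := Hup y z).
  assert (E1 : hsub z x = hsub (hsub y x) (hscal (/beta) G)) by (apply hext; intro w; unfold z; ipexp; ring).
  assert (E2 : hsub z y = hscal (- / beta) G) by (apply hext; intro w; unfold z; ipexp; ring).
  rewrite E1 in H1. rewrite E2 in H2. ipexp_in H1. ipexp_in H2.
  assert (EG : hinner (gp y) G - hinner (gp x) G = hinner G G) by (unfold G; ipexp; rewrite (hinner_sym X (gp x) (gp y)); ring).
  assert (Hbb : / beta * beta = 1) by (field; lra).
  assert (EE : hinner G G / (2 * beta) = / beta * hinner G G - / beta * / beta * hinner G G * (beta / 2)) by (field; lra).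
  rewrite EE. 
  assert (Hx: hinner (gp x) (hsub y x) = hinner (gp x) y - hinner (gp x) x) by (ipexp; ring).
  rewrite Hx.
  nra.
Qed.

Lemma BH {X : Hilbert} (phi : X -> R) (gp : X -> X) beta : 0 < beta ->
  (forall a b, phi a + hinner (gp a) (hsub b a) <= phi b) ->
  (forall a b, phi b <= phi a + hinner (gp a) (hsub b a) + beta / 2 * hinner (hsub b a) (hsub b a)) ->
  forall x y, hinner (hsub (gp x) (gp y)) (hsub (gp x) (gp y)) <=
     beta * hinner (hsub (gp x) (gp y)) (hsub x y).
Proof.
  intros Hb Hlo Hup x y.
  assert (H1 := BH1 phi gp beta Hb Hlo Hup x y).
  assert (H2 := BH1 phi gp beta Hb Hlo Hup y x).
  assert (E : hinner (hsub (gp y) (gp x)) (hsub (gp y) (gp x)) = hinner (hsub (gp x) (gp y)) (hsub (gp x) (gp y)))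
    by (ipexp; rewrite (hinner_sym X (gp y) (gp x)); ring).
  rewrite E in H1.
  set (Q := hinner (hsub (gp x) (gp y)) (hsub (gp x) (gp y))) in *.
  assert (E2 : hinner (hsub (gp x) (gp y)) (hsub x y) = - (hinner (gp x) (hsub y x) + hinner (gp y) (hsub x y)))
    by (ipexp; ring).
  rewrite E2.
  assert (Q / (2 * beta) * 2 * beta = Q) by (field; lra).
  nra.
Qed.

Lemma cocoer {X : Hilbert} mu beta (f : X -> R) gradf : 0 <= mu -> 0 < beta ->
  strongly_convex mu f -> is_frechet_gradient f gradf -> lipschitz beta gradf ->
  forall x y,
  hinner (hsub (hsub (gradf x) (gradf y)) (hscal mu (hsub x y)))
         (hsub (hsub (gradf x) (gradf y)) (hscal mu (hsub x y))) <=
  beta * hinner (hsub (hsub (gradf x) (gradf y)) (hscal mu (hsub x y))) (hsub x y).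
Proof.
  intros Hmu Hb Hs Hfr Hl x y.
  set (phi := fun z => f z - mu / 2 * hinner z z).
  set (gp := fun z => hsub (gradf z) (hscal mu z)).
  assert (E : hsub (hsub (gradf x) (gradf y)) (hscal mu (hsub x y)) = hsub (gp x) (gp y))
    by (apply hext; intro w; unfold gp; ipexp; ring).
  rewrite E. apply (BH phi gp beta Hb).
  - intros a b. assert (H := SC_ineq mu f gradf Hmu Hs Hfr a b). unfold phi, gp.
    ipexp. ipexp_in H. rewrite (hinner_sym X b a) in H. try rewrite (hinner_sym X b a). lra.
  - intros a b. assert (H := DL_ineq beta f gradf (Rlt_le _ _ Hb) Hfr Hl a b). unfold phi, gp.
    assert (H2 := hinner_pos _ (hsub b a)).
    ipexp. ipexp_in H. ipexp_in H2. rewrite (hinner_sym X b a) in H, H2. try rewrite (hinner_sym X b a).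
    nra.
Qed.

Lemma le_eps1 (a b K : R) : (forall e, 0 < e <= 1 -> a <= b + e * K) -> a <= b.
Proof.
  intro H. destruct (Rle_dec a b) as [|Hn]; [assumption|].
  exfalso. assert (HK := Rabs_pos K).
  set (e := Rmin 1 ((a - b) / (2 * (Rabs K + 1)))).
  assert (He0 : 0 < (a - b) / (2 * (Rabs K + 1))) by (apply Rdiv_lt_0_compat; lra).
  assert (He : 0 < e <= 1) by (unfold e; split; [apply Rmin_glb_lt; lra| apply Rmin_l]).
  specialize (H e He).
  assert (e * K <= e * Rabs K) by (apply Rmult_le_compat_l; [lra| apply Rle_abs]).
  assert (e <= (a - b) / (2 * (Rabs K + 1))) by apply Rmin_r.
  assert (e * (Rabs K + 1) <= (a - b) / 2).
  { apply Rle_trans with ((a - b) / (2 * (Rabs K + 1)) * (Rabs K + 1)).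
    apply Rmult_le_compat_r; lra. right. field. lra. }
  nra.
Qed.

Lemma prox_opt {X : Hilbert} gamma omega (g : X -> ERext) u P : 0 < gamma -> 0 <= omega ->
  hypoconvex omega g -> is_prox_point gamma g u P ->
  forall y r, g y = Fin r -> exists rP, g P = Fin rP /\
    rP + / gamma * hinner (hsub u P) (hsub y P) - omega / 2 * hinner (hsub y P) (hsub y P) <= r.
Proof.
  intros Hg Hom Hh [[rP HrP] Hmin] y r Hr. exists rP. split; [exact HrP|].
  assert (Hy : hinner y y = hinner P P + 2 * hinner P (hsub y P) + hinner (hsub y P) (hsub y P)).
  { ipexp. rewrite (hinner_sym X y P). ring. }
  set (d := hsub y P) in *.
  apply le_eps1 with (K := (/ (2 * gamma) - omega / 2) * hinner d d).
  intros t Ht.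
  unfold hypoconvex, convex_ext in Hh.
  assert (Hc := Hh y P t (conj (Rlt_le _ _ (proj1 Ht)) (proj2 Ht))).
  cbv beta in Hc. rewrite Hr, HrP in Hc. rewrite seg_eq in Hc. fold d in Hc.
  assert (Hm := Hmin (hadd P (hscal t d))). rewrite HrP in Hm.
  rewrite !nsq in Hc, Hm.
  destruct (g (hadd P (hscal t d))) as [s|] eqn:Hs; simpl in Hc, Hm; [| contradiction].
  rewrite ?nsq' in Hc, Hm. ipexp_in Hc. ipexp_in Hm. rewrite Hy in Hc.
  rewrite (hinner_sym X d P) in Hc.
  rewrite (hinner_sym X d P), (hinner_sym X d u), (hinner_sym X P u) in Hm.
  assert (Hdd := hinner_pos _ d).
  assert (Z : t * (rP + / gamma * hinner (hsub u P) d - omega / 2 * hinner d d - (r + t * ((/ (2 * gamma) - omega / 2) * hinner d d))) <= 0).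
  { ipexp. try rewrite (hinner_sym X d P); try rewrite (hinner_sym X d u). 
    replace (/ (2 * gamma)) with (/ gamma / 2) in * by (field; lra).
    assert (EP : hnorm P * (hnorm P * 1) = hinner P P) by apply nsq'. rewrite EP in Hc. lra. }
  apply pos_div_le in Z; lra.
Qed.

Lemma prox_firm {X : Hilbert} gamma omega (g : X -> ERext) u v P Q : 0 < gamma -> 0 <= omega ->
  hypoconvex omega g -> is_prox_point gamma g u P -> is_prox_point gamma g v Q ->
  (1 - gamma * omega) * hinner (hsub P Q) (hsub P Q) <= hinner (hsub u v) (hsub P Q).
Proof.
  intros Hg Hom Hh HP HQ.
  pose proof HP as [[rP HrP] _]. pose proof HQ as [[rQ HrQ] _].
  destruct (prox_opt gamma omega g u P Hg Hom Hh HP Q rQ HrQ) as [rP' [H1 H2]].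
  destruct (prox_opt gamma omega g v Q Hg Hom Hh HQ P rP HrP) as [rQ' [H3 H4]].
  rewrite HrP in H1. injection H1 as <-. rewrite HrQ in H3. injection H3 as <-.
  ipexp_in H2. ipexp_in H4. ipexp.
  rewrite ?(hinner_sym X Q P), ?(hinner_sym X Q u), ?(hinner_sym X Q v), ?(hinner_sym X P u),
     ?(hinner_sym X P v) in H2, H4 |- *.
  set (N := hinner P P - hinner P Q - (hinner P Q - hinner Q Q)).
  set (W := hinner u P - hinner u Q - (hinner v P - hinner v Q)).
  assert (S : / gamma * (N - W) - omega * N <= 0) by (unfold N, W; lra).
  apply Rmult_le_compat_l with (r := gamma) in S; [|lra].
  replace (gamma * (/ gamma * (N - W) - omega * N)) with (N - W - gamma * omega * N) in S by (field; lra).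
  lra.
Qed.

Lemma prox_unique {X : Hilbert} gamma omega (g : X -> ERext) u P Q : 0 < gamma -> 0 <= omega ->
  gamma * omega < 1 ->
  hypoconvex omega g -> is_prox_point gamma g u P -> is_prox_point gamma g u Q -> P = Q.
Proof.
  intros Hg Hom Hgo Hh HP HQ.
  assert (H := prox_firm gamma omega g u u P Q Hg Hom Hh HP HQ).
  assert (E : hsub u u = hzero) by (apply hadd_opp).
  rewrite E, ip_zero_l in H. apply ip_self_eq0.
  assert (H2 := hinner_pos _ (hsub P Q)). nra.
Qed.

Lemma glb_exists (E : R -> Prop) m0 : (exists v, E v) -> (forall v, E v -> m0 <= v) ->
  exists m, (forall v, E v -> m <= v) /\ (forall m', m < m' -> exists v, E v /\ v < m').
Proof.
  intros [v0 Hv0] Hlb.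
  destruct (completeness (fun w => E (- w))) as [l [Hub Hl]].
  - exists (- m0). intros w Hw. specialize (Hlb _ Hw). lra.
  - exists (- v0). rewrite Ropp_involutive. exact Hv0.
  - exists (- l). split.
    + intros v Hv. assert (Hv' : E (- - v)) by (rewrite Ropp_involutive; exact Hv).
      specialize (Hub _ Hv'). lra.
    + intros m' Hm'. apply NNPP. intro Hn.
      assert (Hb : is_upper_bound (fun w => E (- w)) (- m')).
      { intros w Hw. destruct (Rle_dec w (- m')) as [|Hw']; [assumption|].
        exfalso. apply Hn. exists (- w). split; [exact Hw| lra]. }
      specialize (Hl _ Hb). lra.
Qed.

Lemma g_lower {X : Hilbert} omega (g : X -> ERext) : 0 <= omega ->
  proper_fun g -> lsc g -> hypoconvex omega g ->
  exists z0 A B, 0 <= A /\ 0 <= B /\ forall y r, g y = Fin r ->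
    - A - B * hnorm (hsub y z0) - omega / 2 * hinner y y <= r.
Proof.
  intros Hom [z0 [r0 Hr0]] Hl Hh.
  destruct (Hl z0 (r0 - 1)) as [eps [Heps He]]. { rewrite Hr0. simpl. lra. }
  set (w := omega / 2 * hinner z0 z0).
  assert (Hw : 0 <= w) by (unfold w; assert (H := hinner_pos _ z0); nra).
  set (C := 1 + Rabs r0 + w - r0).
  assert (HC : 1 <= C) by (unfold C; assert (H := Rle_abs r0); lra).
  exists z0, (Rabs r0 + 1), (2 * C / eps).
  split; [assert (H := Rabs_pos r0); lra|]. split; [apply Rlt_le, Rdiv_lt_0_compat; lra|].
  intros y r Hr.
  assert (Hyy := hinner_pos _ y).
  set (n := hnorm (hsub y z0)). assert (Hn : 0 <= n) by apply hnorm_pos.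
  assert (HB : 0 <= 2 * C / eps * n) by (apply Rmult_le_pos; [apply Rlt_le, Rdiv_lt_0_compat; lra| lra]).
  destruct (Rlt_dec n eps) as [Hlt | Hge].
  - specialize (He y Hlt). rewrite Hr in He. simpl in He.
    assert (H := Rle_abs (-r0)). rewrite Rabs_Ropp in H. nra.
  - apply Rnot_lt_le in Hge.
    set (t := eps / (2 * n)).
    assert (Hnp : 0 < n) by lra.
    assert (Ht0 : 0 < t) by (apply Rdiv_lt_0_compat; lra).
    assert (Ht1 : t <= 1 / 2).
    { unfold t. apply Rmult_le_reg_r with (2 * n); [lra|].
      unfold Rdiv. rewrite Rmult_assoc, Rinv_l by lra. lra. }
    unfold hypoconvex, convex_ext in Hh.
    assert (Hc := Hh y z0 t ltac:(lra)). cbv beta in Hc.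
    rewrite seg_eq in Hc.
    assert (Hd : hnorm (hsub (hadd z0 (hscal t (hsub y z0))) z0) < eps).
    { rewrite add_sub_l, hnorm_scal, Rabs_pos_eq by lra. fold n.
      unfold t. replace (eps / (2 * n) * n) with (eps / 2) by (field; lra). lra. }
    specialize (He _ Hd).
    rewrite Hr, Hr0 in Hc. rewrite !nsq in Hc.
    destruct (g (hadd z0 (hscal t (hsub y z0)))) as [s|]; simpl in Hc, He; [|contradiction].
    rewrite ?nsq' in Hc.
    assert (Hs0 := hinner_pos _ (hadd z0 (hscal t (hsub y z0)))).
    fold w in Hc.
    assert (E1 : omega / 2 * hinner z0 z0 = w) by reflexivity.
    assert (Hk : t * (r + omega / 2 * hinner y y) >= - C).
    { assert (H := Rle_abs r0). unfold C.
      assert (Hcc : 0 <= omega / 2 * hinner (hadd z0 (hscal t (hsub y z0))) (hadd z0 (hscal t (hsub y z0)))) by nra.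
      assert ((1 - t) * (r0 + w) <= Rabs r0 + w).
      { destruct (Rle_dec 0 (r0 + w)); [nra|]. assert (- r0 <= Rabs r0) by (rewrite <- Rabs_Ropp; apply Rle_abs). nra. }
      idtac. nra. }
    assert (Hk2 : r + omega / 2 * hinner y y >= - C / t).
    { destruct (Rge_dec (r + omega / 2 * hinner y y) (- C / t)) as [|Hn']; [assumption|]. exfalso.
      assert (t * (r + omega / 2 * hinner y y) < t * (- C / t)) by (apply Rmult_lt_compat_l; lra).
      assert (t * (- C / t) = - C) by (field; lra). lra. }
    replace (- C / t) with (- (2 * C / eps * n)) in Hk2 by (unfold t; field; lra).
    assert (H := Rabs_pos r0). lra.
Qed.

Lemma F_lower {X : Hilbert} gamma omega (g : X -> ERext) u : 0 < gamma -> 0 <= omega ->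
  gamma * omega < 1 -> proper_fun g -> lsc g -> hypoconvex omega g ->
  exists m0, forall y r, g y = Fin r -> m0 <= r + / (2 * gamma) * hnorm (hsub u y) ^ 2.
Proof.
  intros Hg Hom Hgo Hp Hl Hh.
  destruct (g_lower omega g Hom Hp Hl Hh) as [z0 [A [B [HA [HB Hlow]]]]].
  set (a := hsub u z0).
  set (c := / gamma - omega).
  assert (Hc : 0 < c).
  { unfold c. assert (omega < / gamma).
    { apply Rmult_lt_reg_l with gamma; [lra|]. rewrite Rinv_r by lra. lra. } lra. }
  set (D := B + omega * hnorm z0 + / gamma * hnorm a).
  exists (- A - omega / 2 * hinner z0 z0 - D ^ 2 / (2 * c)).
  intros y r Hr. specialize (Hlow y r Hr).
  set (w := hsub y z0) in *.
  assert (Ey : hinner y y = hinner z0 z0 + 2 * hinner z0 w + hinner w w)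
    by (unfold w; ipexp; rewrite (hinner_sym X y z0); ring).
  assert (Eu : hnorm (hsub u y) ^ 2 = hinner a a - 2 * hinner a w + hinner w w)
    by (rewrite nsq; unfold a, w; ipexp; rewrite ?(hinner_sym X y u), ?(hinner_sym X z0 u), ?(hinner_sym X y z0); ring).
  rewrite Eu. rewrite Ey in Hlow.
  set (n := hnorm w) in *.
  assert (Ew : hinner w w = n ^ 2) by (unfold n; rewrite nsq; reflexivity).
  rewrite Ew in Hlow |- *.
  assert (C1 := CS1 z0 w). assert (C2 := CS1 a w). fold n in C1, C2.
  assert (Haa := hinner_pos _ a).
  assert (Hn := hnorm_pos w). fold n in Hn.
  assert (Hz := hnorm_pos z0). assert (Ha := hnorm_pos a).
  assert (Hsq : 0 <= c / 2 * (n - D / c) ^ 2) by (apply Rmult_le_pos; [lra| apply pow2_ge_0]).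
  assert (Eid : c / 2 * (n - D / c) ^ 2 = c / 2 * n ^ 2 - D * n + D ^ 2 / (2 * c)) by (field; lra).
  assert (T1 : omega * hinner z0 w <= omega * (hnorm z0 * n)) by (apply Rmult_le_compat_l; lra).
  assert (T2 : / gamma * hinner a w <= / gamma * (hnorm a * n))
    by (apply Rmult_le_compat_l; [left; apply Rinv_0_lt_compat; lra| lra]).
  assert (T3 : 0 <= / (2 * gamma) * hinner a a) by (apply Rmult_le_pos; [left; apply Rinv_0_lt_compat; lra| lra]).
  assert (Eg : / (2 * gamma) = / gamma / 2) by (field; lra). rewrite Eg in T3 |- *.
  assert (EDn : D * n = B * n + omega * (hnorm z0 * n) + / gamma * (hnorm a * n)) by (unfold D; ring).
  assert (Ecn : c / 2 * n ^ 2 = / gamma / 2 * n ^ 2 - omega / 2 * n ^ 2) by (unfold c; field; lra).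
  clearbody D c n. 
  assert (HBn : 0 <= B * n) by nra.
  lra.
Qed.

Lemma F_mid {X : Hilbert} gamma omega (g : X -> ERext) u y1 y2 r1 r2 : 0 < gamma ->
  hypoconvex omega g -> g y1 = Fin r1 -> g y2 = Fin r2 ->
  exists s, g (hadd (hscal (1/2) y1) (hscal (1 - 1/2) y2)) = Fin s /\
   s + / (2 * gamma) * hnorm (hsub u (hadd (hscal (1/2) y1) (hscal (1 - 1/2) y2))) ^ 2 <=
   (r1 + / (2 * gamma) * hnorm (hsub u y1) ^ 2 + (r2 + / (2 * gamma) * hnorm (hsub u y2) ^ 2)) / 2
   - (/ gamma - omega) / 8 * hinner (hsub y1 y2) (hsub y1 y2).
Proof.
  intros Hg Hh H1 H2.
  unfold hypoconvex, convex_ext in Hh.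
  assert (Hc := Hh y1 y2 (1/2) ltac:(lra)). cbv beta in Hc.
  rewrite H1, H2 in Hc. rewrite !nsq in Hc |- *.
  destruct (g (hadd (hscal (1/2) y1) (hscal (1 - 1/2) y2))) as [s|]; simpl in Hc; [|contradiction].
  exists s. split; [reflexivity|].
  rewrite ?nsq' in Hc.
  ipexp_in Hc. ipexp.
  rewrite ?(hinner_sym X y2 y1), ?(hinner_sym X y1 u), ?(hinner_sym X y2 u) in Hc |- *.
  assert (Eg : / (2 * gamma) = / gamma / 2) by (field; lra). rewrite Eg.
  lra.
Qed.

Lemma inv_succ_le (n N : nat) : (N <= n)%nat -> / (INR n + 1) <= / (INR N + 1).
Proof.
  intro H. apply Rinv_le_contravar. assert (0 <= INR N) by apply pos_INR. lra.
  apply le_INR in H. lra.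
Qed.

Lemma small_inv (e : R) : 0 < e -> exists N, / (INR N + 1) < e.
Proof.
  intro He. destruct (archimed_cor1 e He) as [N [HN HN0]]. exists N.
  eapply Rle_lt_trans; [|exact HN]. apply Rinv_le_contravar.
  apply lt_0_INR. exact HN0. lra.
Qed.

Lemma q_cont {X : Hilbert} (u P y : X) :
  Rabs (hnorm (hsub u y) ^ 2 - hnorm (hsub u P) ^ 2) <=
  hnorm (hsub y P) ^ 2 + 2 * hnorm (hsub u P) * hnorm (hsub y P).
Proof.
  assert (E : hnorm (hsub u y) ^ 2 - hnorm (hsub u P) ^ 2 =
              hnorm (hsub y P) ^ 2 - 2 * hinner (hsub u P) (hsub y P)).
  { rewrite !nsq. ipexp. rewrite ?(hinner_sym X y u), ?(hinner_sym X P u), ?(hinner_sym X y P). ring. }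
  rewrite E. assert (H := CS (hsub u P) (hsub y P)). apply abs_le in H.
  assert (0 <= hnorm (hsub y P) ^ 2) by apply pow2_ge_0.
  apply abs_le_intro; lra.
Qed.

Lemma prox_exists {X : Hilbert} gamma omega (g : X -> ERext) u : 0 < gamma -> 0 <= omega ->
  gamma * omega < 1 -> proper_fun g -> lsc g -> hypoconvex omega g ->
  exists P, is_prox_point gamma g u P.
Proof.
  intros Hg Hom Hgo Hp Hl Hh.
  set (q := fun y => / (2 * gamma) * hnorm (hsub u y) ^ 2).
  destruct (F_lower gamma omega g u Hg Hom Hgo Hp Hl Hh) as [m0 Hm0].
  set (E := fun v => exists y r, g y = Fin r /\ v = r + q y).
  destruct (glb_exists E m0) as [m [Hm1 Hm2]].
  { destruct Hp as [y [r Hr]]. exists (r + q y). exists y, r. auto. }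
  { intros v [y [r [Hr ->]]]. apply Hm0. exact Hr. }
  set (c := / gamma - omega).
  assert (Hc : 0 < c).
  { unfold c. assert (omega < / gamma).
    { apply Rmult_lt_reg_l with gamma; [lra|]. rewrite Rinv_r by lra. lra. } lra. }
  set (Pn := fun n y => exists r, g y = Fin r /\ r + q y < m + / (INR n + 1)).
  assert (HPn : forall n, exists y, Pn n y).
  { intro n. assert (Hpos : 0 < / (INR n + 1)) by (apply Rinv_0_lt_compat; assert (0 <= INR n) by apply pos_INR; lra).
    destruct (Hm2 (m + / (INR n + 1))) as [v [[y [r [Hr ->]]] Hv]]; [lra|].
    exists y, r. auto. }
  set (ys := fun n => epsilon (inhabits hzero) (Pn n)).
  assert (Hys : forall n, Pn n (ys n)) by (intro n; apply epsilon_spec, HPn).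
  assert (Hcau : forall n k, c / 8 * hinner (hsub (ys n) (ys k)) (hsub (ys n) (ys k)) <=
                  (/ (INR n + 1) + / (INR k + 1)) / 2).
  { intros n k. destruct (Hys n) as [rn [Hrn Hln]]. destruct (Hys k) as [rk [Hrk Hlk]].
    destruct (F_mid gamma omega g u (ys n) (ys k) rn rk Hg Hh Hrn Hrk) as [s [Hs Hsl]].
    assert (Hmid := Hm1 (s + q (hadd (hscal (1/2) (ys n)) (hscal (1 - 1/2) (ys k))))).
    assert (Hm' : m <= s + q (hadd (hscal (1/2) (ys n)) (hscal (1 - 1/2) (ys k))))
      by (apply Hmid; eexists; eexists; split; [exact Hs| reflexivity]).
    unfold q in *. fold c in Hsl. lra. }
  destruct (hcomplete X ys) as [P HP].
  { intros eps Heps.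
    assert (He2 : 0 < c * eps ^ 2 / 8) by (apply Rdiv_lt_0_compat; [apply Rmult_lt_0_compat; [lra| apply pow_lt; lra]| lra]).
    destruct (small_inv _ He2) as [N HN]. exists N. intros n k Hn Hk.
    change (hnorm (hsub (ys n) (ys k)) < eps). apply hnorm_sq_lt; [lra|].
    assert (H := Hcau n k). assert (H1 := inv_succ_le n N Hn). assert (H2 := inv_succ_le k N Hk).
    assert (H3 : c / 8 * hinner (hsub (ys n) (ys k)) (hsub (ys n) (ys k)) < c * eps ^ 2 / 8) by lra.
    apply Rmult_lt_reg_l with (c / 8); [lra|]. lra. }
  assert (HP' : forall eps, 0 < eps -> exists N, forall n, (N <= n)%nat -> hnorm (hsub (ys n) P) < eps) by exact HP.
  clear HP.
  assert (Hmin : exists rP, g P = Fin rP /\ rP + q P <= m).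
  { apply NNPP. intro Hn.
    assert (Hc' : exists c', m - q P < c' /\ elt (Fin c') (g P)).
    { destruct (g P) as [rP|] eqn:HgP.
      - exists ((rP + (m - q P)) / 2).
        assert (rP + q P > m). { apply Rnot_le_gt. intro Hle. apply Hn. exists rP. auto. }
        simpl. lra.
      - exists (m - q P + 1). simpl. lra. }
    destruct Hc' as [c' [Hc'1 Hc'2]].
    set (eta := c' - (m - q P)).
    assert (Heta : 0 < eta) by (unfold eta; lra).
    destruct (Hl P c' Hc'2) as [e1 [He1 Hle1]].
    set (K := 1 + 2 * hnorm (hsub u P)).
    assert (HK : 1 <= K) by (unfold K; assert (H := hnorm_pos (hsub u P)); lra).
    set (rho := Rmin e1 (Rmin 1 (eta * gamma / K))).
    assert (Hrho : 0 < rho).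
    { unfold rho. apply Rmin_glb_lt; [lra| apply Rmin_glb_lt; [lra|]].
      apply Rdiv_lt_0_compat; [apply Rmult_lt_0_compat|]; lra. }
    destruct (HP' rho Hrho) as [N1 HN1].
    destruct (small_inv (eta / 2) ltac:(lra)) as [N2 HN2].
    set (n := Nat.max N1 N2).
    specialize (HN1 n (Nat.le_max_l _ _)).
    assert (Hi := inv_succ_le n N2 (Nat.le_max_r _ _)).
    destruct (Hys n) as [rn [Hrn Hln]].
    assert (Hd1 : hnorm (hsub (ys n) P) < e1) by (eapply Rlt_le_trans; [exact HN1| apply Rmin_l]).
    specialize (Hle1 _ Hd1). rewrite Hrn in Hle1. simpl in Hle1.
    assert (Hq := q_cont u P (ys n)). apply abs_le in Hq.
    set (dn := hnorm (hsub (ys n) P)) in *.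
    assert (Hdn0 : 0 <= dn) by apply hnorm_pos.
    assert (Hdn1 : dn <= 1) by (left; eapply Rlt_le_trans; [exact HN1| unfold rho; eapply Rle_trans; [apply Rmin_r| apply Rmin_l]]).
    assert (Hdn2 : dn <= eta * gamma / K) by (left; eapply Rlt_le_trans; [exact HN1| unfold rho; eapply Rle_trans; [apply Rmin_r| apply Rmin_r]]).
    assert (Hqq : q (ys n) - q P >= - (eta / 2)).
    { unfold q. 
      assert (Hb : dn ^ 2 + 2 * hnorm (hsub u P) * dn <= K * dn) by (unfold K; nra).
      assert (Hb2 : K * dn <= eta * gamma) by (apply Rmult_le_reg_r with (/ K);
        [apply Rinv_0_lt_compat; lra|]; replace (K * dn * / K) with dn by (field; lra); exact Hdn2).
      assert (Hg2 : 0 < / (2 * gamma)) by (apply Rinv_0_lt_compat; lra).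
      assert (Eg : / (2 * gamma) * (eta * gamma) = eta / 2) by (field; lra).
      assert (/ (2 * gamma) * (hnorm (hsub u (ys n)) ^ 2 - hnorm (hsub u P) ^ 2) >= - (/ (2 * gamma) * (eta * gamma))).
      { apply Rle_ge. replace (- (/ (2 * gamma) * (eta * gamma))) with (/ (2 * gamma) * (- (eta * gamma))) by ring.
        apply Rmult_le_compat_l; lra. }
      lra. }
    unfold eta in *. lra. }
  destruct Hmin as [rP [HrP HPm]].
  exists P. split; [exists rP; exact HrP|].
  intro y. rewrite HrP. destruct (g y) as [r|] eqn:Hgy; simpl; [|exact I].
  assert (Hy : m <= r + q y) by (apply Hm1; exists y, r; auto).
  unfold q in *. lra.
Qed.

Lemma gam_facts mu omega beta gamma : mu >= omega -> omega >= 0 -> beta > 0 ->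
  0 < gamma < 2 / (beta + 2 * mu) ->
  gamma * (beta + 2 * mu) < 2 /\ gamma * omega < 1 /\ gamma * mu < 1.
Proof.
  intros H1 H2 H3 [H4 H5].
  assert (H6 : gamma * (beta + 2 * mu) < 2).
  { apply Rmult_lt_compat_r with (r := beta + 2 * mu) in H5; [|lra].
    unfold Rdiv in H5. rewrite Rmult_assoc, Rinv_l, Rmult_1_r in H5 by lra. exact H5. }
  split; [exact H6|]. split; nra.
Qed.

Lemma prox_spec {X : Hilbert} gamma omega (g : X -> ERext) u : 0 < gamma -> 0 <= omega ->
  gamma * omega < 1 -> proper_fun g -> lsc g -> hypoconvex omega g ->
  is_prox_point gamma g u (prox gamma g u).
Proof.
  intros. unfold prox. apply epsilon_spec. eapply prox_exists; eauto.
Qed.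

Lemma step_bound {X : Hilbert} mu beta gamma (f : X -> R) gradf : 0 <= mu -> 0 < beta ->
  strongly_convex mu f -> is_frechet_gradient f gradf -> lipschitz beta gradf ->
  0 < gamma -> gamma * beta <= 2 * (1 - gamma * mu) -> forall x y,
  hinner (hsub (hsub x (hscal gamma (gradf x))) (hsub y (hscal gamma (gradf y))))
         (hsub (hsub x (hscal gamma (gradf x))) (hsub y (hscal gamma (gradf y)))) <=
  (1 - gamma * mu) ^ 2 * hinner (hsub x y) (hsub x y).
Proof.
  intros Hmu Hb Hs Hfr Hl Hg Hgb x y.
  assert (Hc := cocoer mu beta f gradf Hmu Hb Hs Hfr Hl x y).
  set (Dl := hsub (hsub (gradf x) (gradf y)) (hscal mu (hsub x y))) in *.
  set (d := hsub x y) in *.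
  assert (E : hsub (hsub x (hscal gamma (gradf x))) (hsub y (hscal gamma (gradf y))) =
              hsub (hscal (1 - gamma * mu) d) (hscal gamma Dl))
    by (apply hext; intro w; unfold Dl, d; ipexp; ring).
  rewrite E. ipexp. rewrite (hinner_sym X Dl d).
  assert (HD := hinner_pos _ Dl).
  assert (Hq : 0 <= hinner Dl d) by nra.
  assert (gamma * (hinner Dl d) * (gamma * beta - 2 * (1 - gamma * mu)) <= 0).
  { assert (0 <= gamma * hinner Dl d) by nra. nra. }
  assert (gamma ^ 2 * hinner Dl Dl <= gamma ^ 2 * (beta * hinner Dl d)) by (apply Rmult_le_compat_l; nra).
  rewrite (hinner_sym X d Dl). lra.
Qed.

Definition setting {X : Hilbert} mu omega beta (f : X -> R) gradf (g : X -> ERext) gamma :=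
  mu >= omega /\ omega >= 0 /\ beta > 0 /\ strongly_convex mu f /\ is_frechet_gradient f gradf /\
  lipschitz beta gradf /\ proper_fun g /\ lsc g /\ hypoconvex omega g /\ 0 < gamma < 2 / (beta + 2 * mu).

Lemma T_prox {X : Hilbert} mu omega beta (f : X -> R) gradf g gamma :
  setting mu omega beta f gradf g gamma -> forall x,
  is_prox_point gamma g (hsub x (hscal gamma (gradf x))) (fb_op gamma g gradf x).
Proof.
  intros (H1 & H2 & H3 & H4 & H5 & H6 & H7 & H8 & H9 & H10) x.
  destruct (gam_facts mu omega beta gamma H1 H2 H3 H10) as (G1 & G2 & G3).
  apply prox_spec with omega; auto; lra.
Qed.

Lemma T_contr {X : Hilbert} mu omega beta (f : X -> R) gradf g gamma :
  setting mu omega beta f gradf g gamma -> forall x y,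
  hnorm (hsub (fb_op gamma g gradf x) (fb_op gamma g gradf y)) <=
  (1 - gamma * mu) / (1 - gamma * omega) * hnorm (hsub x y).
Proof.
  intros HS x y. pose proof HS as (H1 & H2 & H3 & H4 & H5 & H6 & H7 & H8 & H9 & H10).
  destruct (gam_facts mu omega beta gamma H1 H2 H3 H10) as (G1 & G2 & G3).
  assert (Hf := prox_firm gamma omega g _ _ _ _ (proj1 H10) ltac:(lra) H9 (T_prox _ _ _ _ _ _ _ HS x) (T_prox _ _ _ _ _ _ _ HS y)).
  assert (Hw := step_bound mu beta gamma f gradf ltac:(lra) H3 H4 H5 H6 (proj1 H10) ltac:(lra) x y).
  set (e := hsub (fb_op gamma g gradf x) (fb_op gamma g gradf y)) in *.
  set (w := hsub (hsub x (hscal gamma (gradf x))) (hsub y (hscal gamma (gradf y)))) in *.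
  assert (Hnw : hnorm w <= (1 - gamma * mu) * hnorm (hsub x y)).
  { apply hnorm_sq_le. assert (0 <= hnorm (hsub x y)) by apply hnorm_pos. nra.
    rewrite Rpow_mult_distr, nsq. exact Hw. }
  assert (HC := CS1 w e).
  rewrite <- nsq in Hf.
  assert (Hne := hnorm_pos e). assert (Hnd := hnorm_pos (hsub x y)).
  assert (Hs' : 0 < 1 - gamma * omega) by lra.
  destruct (Req_dec (hnorm e) 0) as [Z|Z].
  - rewrite Z. apply Rmult_le_pos; [apply Rlt_le, Rdiv_lt_0_compat; lra| exact Hnd].
  - assert (Hpos : 0 < hnorm e) by lra.
    assert (K : (1 - gamma * omega) * hnorm e <= (1 - gamma * mu) * hnorm (hsub x y)).
    { apply Rmult_le_reg_r with (hnorm e); [exact Hpos|].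
      assert (hnorm w * hnorm e <= (1 - gamma * mu) * hnorm (hsub x y) * hnorm e) by (apply Rmult_le_compat_r; lra).
      simpl in Hf. nra. }
    apply Rmult_le_reg_l with (1 - gamma * omega); [exact Hs'|].
    replace ((1 - gamma * omega) * ((1 - gamma * mu) / (1 - gamma * omega) * hnorm (hsub x y)))
      with ((1 - gamma * mu) * hnorm (hsub x y)) by (field; lra).
    exact K.
Qed.

Lemma T_avg {X : Hilbert} mu beta (f : X -> R) gradf g gamma :
  setting mu mu beta f gradf g gamma -> forall x y,
  (1 - gamma * beta / (2 * (1 - gamma * mu))) *
    hinner (hsub (hsub x y) (hsub (fb_op gamma g gradf x) (fb_op gamma g gradf y)))
           (hsub (hsub x y) (hsub (fb_op gamma g gradf x) (fb_op gamma g gradf y))) <=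
  hinner (hsub x y) (hsub x y) -
  hinner (hsub (fb_op gamma g gradf x) (fb_op gamma g gradf y)) (hsub (fb_op gamma g gradf x) (fb_op gamma g gradf y)).
Proof.
  intros HS x y. pose proof HS as (H1 & H2 & H3 & H4 & H5 & H6 & H7 & H8 & H9 & H10).
  destruct (gam_facts mu mu beta gamma H1 H2 H3 H10) as (G1 & G2 & G3).
  assert (Hf := prox_firm gamma mu g _ _ _ _ (proj1 H10) ltac:(lra) H9 (T_prox _ _ _ _ _ _ _ HS x) (T_prox _ _ _ _ _ _ _ HS y)).
  assert (Hc := cocoer mu beta f gradf ltac:(lra) H3 H4 H5 H6 x y).
  set (e := hsub (fb_op gamma g gradf x) (fb_op gamma g gradf y)) in *.
  set (Dl := hsub (hsub (gradf x) (gradf y)) (hscal mu (hsub x y))) in *.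
  set (d := hsub x y) in *.
  assert (E : hsub (hsub x (hscal gamma (gradf x))) (hsub y (hscal gamma (gradf y))) =
              hsub (hscal (1 - gamma * mu) d) (hscal gamma Dl))
    by (apply hext; intro w; unfold Dl, d; ipexp; ring).
  rewrite E in Hf. clearbody e Dl d.
  set (s := 1 - gamma * mu) in *.
  assert (Hs : 0 < s) by (unfold s; lra).
  assert (Y := hinner_pos _ (hsub (hscal (2 / beta) Dl) (hsub d e))).
  ipexp_in Y. ipexp_in Hf. ipexp.
  rewrite ?(hinner_sym X e d), ?(hinner_sym X Dl d), ?(hinner_sym X Dl e), ?(hinner_sym X e Dl), ?(hinner_sym X d Dl) in *.
  set (a := hinner d d) in *. set (b := hinner e e) in *. set (p := hinner d e) in *.
  set (DD := hinner Dl Dl) in *. set (qq := hinner Dl d) in *. set (r := hinner Dl e) in *.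
  clearbody a b p DD qq r.
  (* Young: q - r <= DD/beta + beta/4 R *)
  set (R := a - 2 * p + b).
  assert (Yg : qq - r <= DD / beta + beta / 4 * R).
  { assert (Ebb : 2 / beta * (2 / beta) = 4 / beta ^ 2) by (field; lra).
    assert (Yb : 0 <= 4 / beta ^ 2 * DD - 4 / beta * (qq - r) + R).
    { unfold R. rewrite <- Ebb. lra. }
    apply Rmult_le_compat_l with (r := beta / 4) in Yb; [|lra].
    replace (beta / 4 * (4 / beta ^ 2 * DD - 4 / beta * (qq - r) + R)) with (DD / beta - (qq - r) + beta / 4 * R) in Yb by (field; lra).
    lra. }
  assert (Hq : DD / beta <= qq) by (apply Rmult_le_reg_l with beta; [lra|]; unfold Rdiv; rewrite <- Rmult_assoc, (Rmult_comm beta DD), Rmult_assoc, Rinv_r, Rmult_1_r by lra; lra).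
  assert (Hr : - (beta / 4) * R <= r) by lra.
  assert (Hfirm : gamma * r <= s * (p - b)) by lra.
  assert (Hpb : gamma / s * r <= p - b).
  { apply Rmult_le_reg_l with s; [lra|]. replace (s * (gamma / s * r)) with (gamma * r) by (field; lra). lra. }
  assert (Hgs : 0 < gamma / s) by (apply Rdiv_lt_0_compat; lra).
  assert (gamma / s * (- (beta / 4) * R) <= gamma / s * r) by (apply Rmult_le_compat_l; lra).
  replace (gamma * beta / (2 * s)) with (2 * (gamma / s) * (beta / 4)) by (field; lra).
  unfold R in *. lra.
Qed.

Lemma argmin_var {X : Hilbert} mu omega beta (f : X -> R) gradf g gamma :
  setting mu omega beta f gradf g gamma -> forall x, is_argmin_sum f g x ->
  forall y r, g y = Fin r -> exists rx, g x = Fin rx /\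
  rx <= r + hinner (gradf x) (hsub y x) + omega / 2 * hinner (hsub y x) (hsub y x).
Proof.
  intros HS x [[rx Hrx] Hmin] y r Hr. pose proof HS as (H1 & H2 & H3 & H4 & H5 & H6 & H7 & H8 & H9 & H10).
  exists rx. split; [exact Hrx|].
  assert (Hy : hinner y y = hinner x x + 2 * hinner x (hsub y x) + hinner (hsub y x) (hsub y x)).
  { ipexp. rewrite (hinner_sym X y x). ring. }
  assert (HDL := DL_ineq beta f gradf ltac:(lra) H5 H6).
  set (d := hsub y x) in *.
  apply le_eps1 with (K := (beta - omega) / 2 * hinner d d).
  intros t Ht.
  unfold hypoconvex, convex_ext in H9.
  assert (Hc := H9 y x t (conj (Rlt_le _ _ (proj1 Ht)) (proj2 Ht))).
  cbv beta in Hc. rewrite Hr, Hrx in Hc. rewrite seg_eq in Hc. fold d in Hc.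
  assert (Hm := Hmin (hadd x (hscal t d))). rewrite Hrx in Hm.
  assert (Hdl := HDL x (hadd x (hscal t d))). rewrite add_sub_l in Hdl.
  rewrite !nsq in Hc.
  destruct (g (hadd x (hscal t d))) as [s|] eqn:Hs; simpl in Hc, Hm; [| contradiction].
  ipexp_in Hc. ipexp_in Hdl. rewrite Hy in Hc.
  assert (EP : hnorm x * (hnorm x * 1) = hinner x x) by apply nsq'. rewrite ?EP in Hc.
  rewrite ?(hinner_sym X d x) in Hc.
  assert (Hdd := hinner_pos _ d).
  assert (Z : t * (rx - (r + hinner (gradf x) d + omega / 2 * hinner d d + t * ((beta - omega) / 2 * hinner d d))) <= 0).
  { lra. }
  apply pos_div_le in Z; lra.
Qed.

Lemma fix_iff {X : Hilbert} mu omega beta (f : X -> R) gradf g gamma :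
  setting mu omega beta f gradf g gamma -> forall x,
  fb_op gamma g gradf x = x <-> is_argmin_sum f g x.
Proof.
  intros HS x. pose proof HS as (H1 & H2 & H3 & H4 & H5 & H6 & H7 & H8 & H9 & H10).
  destruct (gam_facts mu omega beta gamma H1 H2 H3 H10) as (G1 & G2 & G3).
  assert (Hgi : omega <= / gamma).
  { apply Rmult_le_reg_l with gamma; [lra|]. rewrite Rinv_r by lra. lra. }
  split.
  - intro Hfix. assert (HP := T_prox _ _ _ _ _ _ _ HS x). rewrite Hfix in HP.
    pose proof HP as [[rx Hrx] _].
    split; [exists rx; exact Hrx|].
    intro y. rewrite Hrx. simpl. destruct (g y) as [r|] eqn:Hr; simpl; [|exact I].
    destruct (prox_opt gamma omega g _ x (proj1 H10) ltac:(lra) H9 HP y r Hr) as [rx' [Hrx' Hopt]].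
    rewrite Hrx in Hrx'. injection Hrx' as <-.
    assert (Hsc := SC_ineq mu f gradf ltac:(lra) H4 H5 x y).
    assert (E : / gamma * hinner (hsub (hsub x (hscal gamma (gradf x))) x) (hsub y x) = - hinner (gradf x) (hsub y x)).
    { assert (E' : hsub (hsub x (hscal gamma (gradf x))) x = hscal (- gamma) (gradf x)) by (apply hext; intro w; ipexp; ring).
      rewrite E', hinner_scal_l. field. lra. }
    rewrite E in Hopt.
    assert (Hdd := hinner_pos _ (hsub y x)).
    assert ((mu - omega) / 2 * hinner (hsub y x) (hsub y x) >= 0) by (apply Rle_ge, Rmult_le_pos; lra).
    lra.
  - intro Ha. symmetry.
    apply (prox_unique gamma omega g (hsub x (hscal gamma (gradf x)))); try lra; [exact H9| |apply (T_prox _ _ _ _ _ _ _ HS x)].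
    pose proof Ha as [[rx Hrx] _].
    split; [exists rx; exact Hrx|].
    intro y. rewrite Hrx. simpl. destruct (g y) as [r|] eqn:Hr; simpl; [|exact I].
    destruct (argmin_var _ _ _ _ _ _ _ HS x Ha y r Hr) as [rx' [Hrx' Hv]].
    rewrite Hrx in Hrx'. injection Hrx' as <-.
    rewrite ?nsq'. ipexp. ipexp_in Hv.
    rewrite ?(hinner_sym X y x), ?(hinner_sym X (gradf x) x), ?(hinner_sym X (gradf x) y),
       ?(hinner_sym X x (gradf x)), ?(hinner_sym X y (gradf x)) in Hv |- *.
    assert (Hdd := hinner_pos _ (hsub y x)). ipexp_in Hdd. rewrite ?(hinner_sym X y x) in Hdd.
    assert (Eg : / (2 * gamma) = / gamma / 2) by (field; lra). rewrite Eg.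
    assert (Hom2 : omega / 2 * (hinner y y - hinner x y - (hinner x y - hinner x x)) <=
                   / gamma / 2 * (hinner y y - hinner x y - (hinner x y - hinner x x)))
      by (apply Rmult_le_compat_r; lra).
    assert (Egg : / gamma / 2 * (gamma * (gamma * hinner (gradf x) (gradf x))) = gamma / 2 * hinner (gradf x) (gradf x)) by (field; lra).
    set (Gx := hinner (gradf x) x) in *. set (Gy := hinner (gradf x) y) in *.
    set (GG := hinner (gradf x) (gradf x)) in *.
    set (ig := / gamma / 2) in *.
    assert (Egx : ig * (gamma * Gx) = / 2 * Gx) by (unfold ig; field; lra).
    assert (Egy : ig * (gamma * Gy) = / 2 * Gy) by (unfold ig; field; lra).
    assert (Egg' : ig * (gamma * (gamma * GG)) = gamma / 2 * GG) by (unfold ig; field; lra).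
    clearbody ig Gx Gy GG.
    lra.
Qed.

Definition inK {X : Hilbert} (z : nat -> X) (N : nat) (a : X) : Prop :=
  forall v c, (forall k, (N <= k)%nat -> hinner (z k) v <= c) -> hinner a v <= c.

Lemma inK_mono {X : Hilbert} (z : nat -> X) n m a : (n <= m)%nat -> inK z m a -> inK z n a.
Proof. intros Hnm H v c Hc. apply H. intros k Hk. apply Hc. lia. Qed.

Lemma inK_z {X : Hilbert} (z : nat -> X) N : inK z N (z N).
Proof. intros v c Hc. apply Hc. lia. Qed.

Lemma inK_mid {X : Hilbert} (z : nat -> X) N a b : inK z N a -> inK z N b ->
  inK z N (hscal (1/2) (hadd a b)).
Proof.
  intros Ha Hb v c Hc. specialize (Ha v c Hc). specialize (Hb v c Hc).
  rewrite hinner_scal_l, hinner_add_l. lra.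
Qed.

Lemma inK_closed {X : Hilbert} (z : nat -> X) N (aj : nat -> X) a :
  (forall j, inK z N (aj j)) ->
  (forall e, 0 < e -> exists j, hnorm (hsub (aj j) a) < e) -> inK z N a.
Proof.
  intros Hj Hc v c Hv.
  apply le_eps with (K := hnorm v). intros e He.
  destruct (Hc e He) as [j Hje].
  specialize (Hj j v c Hv).
  assert (H := CS (hsub (aj j) a) v). apply abs_le in H. rewrite ip_sub_l in H.
  assert (Hv0 := hnorm_pos v).
  assert (hnorm (hsub (aj j) a) * hnorm v <= e * hnorm v) by (apply Rmult_le_compat_r; lra).
  lra.
Qed.

Lemma hull_point {X : Hilbert} (z : nat -> X) M : (forall k, hinner (z k) (z k) <= M) ->
  exists a, forall N, inK z N a.
Proof.
  intro HM.
  assert (Hd : forall N, exists m, (forall a, inK z N a -> m <= hinner a a) /\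
                (forall m', m < m' -> exists a, inK z N a /\ hinner a a < m')).
  { intro N. destruct (glb_exists (fun v => exists a, inK z N a /\ v = hinner a a) 0) as [m [H1 H2]].
    - exists (hinner (z N) (z N)). exists (z N). split; [apply inK_z| reflexivity].
    - intros v [a [_ ->]]. apply hinner_pos.
    - exists m. split.
      + intros a Ha. apply H1. exists a. auto.
      + intros m' Hm'. destruct (H2 m' Hm') as [v [[a [Ha ->]] Hv]]. exists a. auto. }
  set (dP := fun N m => (forall a, inK z N a -> m <= hinner a a) /\
                (forall m', m < m' -> exists a, inK z N a /\ hinner a a < m')).
  set (d := fun N => epsilon (inhabits 0) (dP N)).
  assert (Hd' : forall N, dP N (d N)) by (intro N; apply epsilon_spec, Hd).
  assert (Hdmono : forall n m, (n <= m)%nat -> d n <= d m).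
  { intros n m Hnm. destruct (Rle_dec (d n) (d m)) as [|Hn]; [assumption|]. exfalso.
    destruct (proj2 (Hd' m) (d n)) as [a [Ha Haa]]; [lra|].
    assert (H := proj1 (Hd' n) a (inK_mono z n m a Hnm Ha)). lra. }
  assert (HdM : forall N, d N <= M).
  { intro N. eapply Rle_trans; [apply (proj1 (Hd' N)), inK_z| apply HM]. }
  destruct (completeness (fun r => exists N, r = d N)) as [D [HDub HDl]].
  { exists M. intros r [N ->]. apply HdM. }
  { exists (d 0%nat). exists 0%nat. reflexivity. }
  assert (HdD : forall N, d N <= D) by (intro N; apply HDub; exists N; reflexivity).
  assert (HDapp : forall e, 0 < e -> exists N, D - e < d N).
  { intros e He. apply NNPP. intro Hn.
    assert (Hb : is_upper_bound (fun r => exists N, r = d N) (D - e)).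
    { intros r [N ->]. destruct (Rle_dec (d N) (D - e)); [assumption|]. exfalso. apply Hn. exists N. lra. }
    specialize (HDl _ Hb). lra. }
  set (aP := fun N a => inK z N a /\ hinner a a < d N + / (INR N + 1)).
  assert (HaP : forall N, exists a, aP N a).
  { intro N. apply (proj2 (Hd' N)). assert (0 < / (INR N + 1)) by (apply Rinv_0_lt_compat; assert (0 <= INR N) by apply pos_INR; lra). lra. }
  set (aa := fun N => epsilon (inhabits hzero) (aP N)).
  assert (Haa : forall N, aP N (aa N)) by (intro N; apply epsilon_spec, HaP).
  assert (Hcau : forall n m, (n <= m)%nat ->
     hinner (hsub (aa n) (aa m)) (hsub (aa n) (aa m)) <= 2 * (D - d n) + 4 * / (INR n + 1)).
  { intros n m Hnm. destruct (Haa n) as [Kn Hn]. destruct (Haa m) as [Km Hm].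
    assert (Kmn := inK_mono z n m _ Hnm Km).
    assert (Hmid := proj1 (Hd' n) _ (inK_mid z n _ _ Kn Kmn)).
    assert (Hi := inv_succ_le m n Hnm).
    assert (Hdm := HdD m).
    ipexp_in Hmid. ipexp. rewrite ?(hinner_sym X (aa m) (aa n)) in Hmid |- *. lra. }
  destruct (hcomplete X aa) as [a Ha].
  { intros eps Heps.
    assert (He : 0 < eps ^ 2 / 8) by (apply Rdiv_lt_0_compat; [apply pow_lt|]; lra).
    destruct (HDapp _ He) as [N1 HN1]. destruct (small_inv _ He) as [N2 HN2].
    exists (Nat.max N1 N2). intros n m Hn Hm.
    change (hnorm (hsub (aa n) (aa m)) < eps). apply hnorm_sq_lt; [lra|].
    assert (Hbound : forall n m, (Nat.max N1 N2 <= n)%nat -> (n <= m)%nat ->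
              hinner (hsub (aa n) (aa m)) (hsub (aa n) (aa m)) < eps ^ 2).
    { intros n' m' Hn' Hnm'. assert (H := Hcau n' m' Hnm').
      assert (H1 := Hdmono N1 n' ltac:(lia)). assert (H2 := inv_succ_le n' N2 ltac:(lia)).
      lra. }
    destruct (Compare_dec.le_lt_dec n m) as [Hnm|Hnm].
    - apply Hbound; lia.
    - assert (E : hinner (hsub (aa n) (aa m)) (hsub (aa n) (aa m)) = hinner (hsub (aa m) (aa n)) (hsub (aa m) (aa n)))
        by (ipexp; rewrite (hinner_sym X (aa m) (aa n)); ring).
      rewrite E. apply Hbound; lia. }
  exists a. intro N.
  apply inK_closed with (aj := fun j => aa (N + j)%nat).
  - intro j. apply inK_mono with (N + j)%nat; [lia| apply (proj1 (Haa _))].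
  - intros e He. destruct (Ha e He) as [N0 HN0]. exists N0. apply (HN0 (N + N0)%nat). lia.
Qed.

Definition nsqr {X : Hilbert} (x : X) := hinner x x.

Lemma hnorm_le1 {X : Hilbert} (x : X) : hnorm x <= 1 + hinner x x.
Proof.
  apply hnorm_sq_le. assert (H := hinner_pos _ x). lra.
  assert (H := hinner_pos _ x). nra.
Qed.

Lemma sub_sym_sq {X : Hilbert} (x y : X) : hinner (hsub x y) (hsub x y) = hinner (hsub y x) (hsub y x).
Proof. ipexp. rewrite (hinner_sym X y x). ring. Qed.

Lemma sub_bound {X : Hilbert} (x y : X) : hinner (hsub x y) (hsub x y) <= 2 * hinner x x + 2 * hinner y y.
Proof.
  assert (H := hinner_pos _ (hadd x y)). ipexp_in H. ipexp. rewrite (hinner_sym X y x) in *. lra.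
Qed.

Lemma cv_comb (a b : nat -> R) la lb c : Un_cv a la -> Un_cv b lb ->
  Un_cv (fun n => (a n - b n + c) / 2) ((la - lb + c) / 2).
Proof.
  intros Ha Hb e He. destruct (Ha e He) as [N1 H1]. destruct (Hb e He) as [N2 H2].
  exists (Nat.max N1 N2). intros n Hn. specialize (H1 n ltac:(lia)). specialize (H2 n ltac:(lia)).
  unfold R_dist in *. apply Rabs_def2 in H1. apply Rabs_def2 in H2.
  apply Rabs_def1; lra.
Qed.


Lemma id1 {X : Hilbert} (z a b : X) : hinner (hsub z b) (hsub z b) =
  hinner (hsub z a) (hsub z a) + 2 * hinner (hsub z a) (hsub a b) + hinner (hsub a b) (hsub a b).
Proof. ipexp. rewrite ?(hinner_sym X a z), ?(hinner_sym X b z), ?(hinner_sym X b a). ring. Qed.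

Lemma hull_cons {X : Hilbert} (xs : nat -> X) (phi : nat -> nat) v L a :
  (forall k, (k <= phi k)%nat) -> Un_cv (fun n => hinner (xs n) v) L ->
  (forall N, inK (fun k => xs (phi k)) N a) -> hinner a v = L.
Proof.
  intros Hphi HL Ha.
  assert (H1 : hinner a v <= L).
  { apply le_eps with (K := 1). intros e He. destruct (HL e He) as [N HN].
    apply (Ha N). intros k Hk. specialize (HN (phi k) ltac:(specialize (Hphi k); lia)).
    unfold R_dist in HN. apply Rabs_def2 in HN. lra. }
  assert (H2 : - hinner a v <= - L).
  { apply le_eps with (K := 1). intros e He. destruct (HL e He) as [N HN].
    rewrite <- ip_opp_r. apply (Ha N). intros k Hk. specialize (HN (phi k) ltac:(specialize (Hphi k); lia)).
    rewrite ip_opp_r.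
    unfold R_dist in HN. apply Rabs_def2 in HN. lra. }
  lra.
Qed.

Lemma weak_fejer {X : Hilbert} (T : X -> X) kappa (x0 p0 : X) : 0 < kappa ->
  (forall x y, kappa * hinner (hsub (hsub x y) (hsub (T x) (T y))) (hsub (hsub x y) (hsub (T x) (T y)))
      <= hinner (hsub x y) (hsub x y) - hinner (hsub (T x) (T y)) (hsub (T x) (T y))) ->
  T p0 = p0 ->
  exists xbar, T xbar = xbar /\ weak_cv (fun n => Nat.iter n T x0) xbar.
Proof.
  intros Hk Hav Hp0.
  set (xs := fun n => Nat.iter n T x0).
  assert (Hxs : forall n, xs (S n) = T (xs n)) by reflexivity.
  assert (Hne : forall x y, hinner (hsub (T x) (T y)) (hsub (T x) (T y)) <= hinner (hsub x y) (hsub x y)).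
  { intros x y. assert (H := Hav x y). assert (H2 := hinner_pos _ (hsub (hsub x y) (hsub (T x) (T y)))). nra. }
  assert (Hfej : forall p, T p = p -> forall n,
     kappa * hinner (hsub (xs n) (xs (S n))) (hsub (xs n) (xs (S n))) <=
     hinner (hsub (xs n) p) (hsub (xs n) p) - hinner (hsub (xs (S n)) p) (hsub (xs (S n)) p)).
  { intros p Hp n. assert (H := Hav (xs n) p). rewrite Hp in H. rewrite Hxs.
    assert (E : hsub (hsub (xs n) p) (hsub (T (xs n)) p) = hsub (xs n) (T (xs n))) by (apply hext; intro w; ipexp; ring).
    rewrite E in H. exact H. }
  set (r := fun n => hinner (hsub (xs n) (xs (S n))) (hsub (xs n) (xs (S n)))).
  assert (Hr0 : forall n, 0 <= r n) by (intro n; apply hinner_pos).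
  assert (Hrdec : forall n, r (S n) <= r n).
  { intro n. unfold r. rewrite sub_sym_sq, (sub_sym_sq (xs n)). rewrite !Hxs. rewrite <- (Hxs n). apply Hne. }
  set (C := hinner (hsub x0 p0) (hsub x0 p0)).
  assert (Hinv : forall n, hinner (hsub (xs (S n)) p0) (hsub (xs (S n)) p0) + kappa * (INR n + 1) * r n <= C).
  { induction n as [|n IH].
    - assert (H := Hfej p0 Hp0 0%nat). simpl INR. unfold r, C. change (xs 0%nat) with x0 in H |- *. lra.
    - assert (H := Hfej p0 Hp0 (S n)). rewrite S_INR.
      assert (Hm : kappa * (INR n + 1) * r (S n) <= kappa * (INR n + 1) * r n).
      { apply Rmult_le_compat_l; [assert (0 <= INR n) by apply pos_INR; nra| apply Hrdec]. }
      unfold r in *. lra. }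
  assert (Hareg : forall eta, 0 < eta -> exists N, forall n, (N <= n)%nat -> r n <= eta).
  { intros eta Heta.
    assert (HC : 0 <= C) by apply hinner_pos.
    destruct (small_inv (eta * kappa / (C + 1))) as [N HN].
    { apply Rdiv_lt_0_compat; [apply Rmult_lt_0_compat|]; lra. }
    exists N. intros n Hn. assert (H := Hinv n). assert (Hi := inv_succ_le n N Hn).
    assert (Hpos := hinner_pos _ (hsub (xs (S n)) p0)).
    assert (HnP : 0 < INR n + 1) by (assert (0 <= INR n) by apply pos_INR; lra).
    assert (H1 : kappa * (INR n + 1) * r n <= C) by lra.
    assert (H2 : r n <= C / (kappa * (INR n + 1))).
    { apply Rmult_le_reg_l with (kappa * (INR n + 1)); [nra|].
      replace (kappa * (INR n + 1) * (C / (kappa * (INR n + 1)))) with C by (field; lra). exact H1. }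
    assert (H3 : C / (kappa * (INR n + 1)) <= (C + 1) / kappa * / (INR n + 1)).
    { unfold Rdiv. rewrite Rinv_mult. 
      assert (0 < / kappa) by (apply Rinv_0_lt_compat; lra).
      assert (0 < / (INR n + 1)) by (apply Rinv_0_lt_compat; lra). nra. }
    assert (H4 : (C + 1) / kappa * / (INR n + 1) <= eta).
    { assert (Hck : 0 < (C + 1) / kappa) by (apply Rdiv_lt_0_compat; lra).
      apply Rle_trans with ((C + 1) / kappa * (eta * kappa / (C + 1))).
      - apply Rmult_le_compat_l; lra.
      - right. field. lra. }
    lra. }
  assert (Hdist : forall p, T p = p -> forall n, hinner (hsub (xs n) p) (hsub (xs n) p) <= hinner (hsub x0 p) (hsub x0 p)).
  { intros p Hp. induction n as [|n IH]; [right; reflexivity|].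
    assert (H := Hfej p Hp n). assert (H2 := hinner_pos _ (hsub (xs n) (xs (S n)))).
    assert (0 <= kappa * hinner (hsub (xs n) (xs (S n))) (hsub (xs n) (xs (S n)))) by nra. lra. }
  set (M := 2 * C + 2 * hinner p0 p0 + 2 * (2 * C + 2 * hinner p0 p0) + 1).
  assert (Hbd : forall n, hinner (xs n) (xs n) <= 2 * C + 2 * hinner p0 p0).
  { intro n. assert (H := sub_bound (hsub (xs n) p0) (hopp p0)).
    assert (E : hsub (hsub (xs n) p0) (hopp p0) = xs n) by (apply hext; intro w; ipexp; ring).
    rewrite E in H. rewrite ip_opp_l, ip_opp_r in H. assert (H2 := Hdist p0 Hp0 n). fold C in H2. lra. }
  assert (Hlimsq : forall p, T p = p -> exists L, Un_cv (fun n => hinner (hsub (xs n) p) (hsub (xs n) p)) L).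
  { intros p Hp. destruct (decreasing_cv (fun n => hinner (hsub (xs n) p) (hsub (xs n) p))) as [L HL].
    - intro n. assert (H := Hfej p Hp n). assert (H2 := hinner_pos _ (hsub (xs n) (xs (S n)))).
      assert (0 <= kappa * hinner (hsub (xs n) (xs (S n))) (hsub (xs n) (xs (S n)))) by nra. lra.
    - exists 0. intros v [n ->]. unfold opp_seq. assert (H := hinner_pos _ (hsub (xs n) p)). lra.
    - exists L. exact HL. }
  assert (Hlimpq : forall p q, T p = p -> T q = q -> exists L, Un_cv (fun n => hinner (xs n) (hsub p q)) L).
  { intros p q Hp Hq. destruct (Hlimsq p Hp) as [Lp HLp]. destruct (Hlimsq q Hq) as [Lq HLq].
    exists ((Lq - Lp + (hinner p p - hinner q q)) / 2).
    assert (H := cv_comb _ _ _ _ (hinner p p - hinner q q) HLq HLp).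
    intros e He. destruct (H e He) as [N HN]. exists N. intros n Hn. specialize (HN n Hn).
    replace (hinner (xs n) (hsub p q)) with
      ((hinner (hsub (xs n) q) (hsub (xs n) q) - hinner (hsub (xs n) p) (hsub (xs n) p) + (hinner p p - hinner q q)) / 2).
    exact HN. ipexp. rewrite (hinner_sym X q (xs n)), (hinner_sym X p (xs n)). field. }
  set (Mb := 2 * C + 2 * hinner p0 p0).
  assert (Hdemi : forall phi : nat -> nat, (forall k, (k <= phi k)%nat) ->
            forall a, (forall N, inK (fun k => xs (phi k)) N a) -> T a = a).
  { intros phi Hphi a Ha.
    set (v := hsub a (T a)).
    set (B := 1 + (2 * Mb + 2 * hinner a a)).
    assert (HB : 1 <= B) by (unfold B; assert (H := hinner_pos _ a); assert (0 <= Mb) by (unfold Mb, C; assert (H0 := hinner_pos _ (hsub x0 p0)); assert (H1 := hinner_pos _ p0); lra); lra).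
    assert (Hvv : hinner v v <= 0).
    { apply le_eps with (K := 2). intros eta Heta.
      assert (Hv : hinner a v <= hinner a v - hinner v v / 2 + eta).
      { set (m := Rmin 1 (eta / (1 + 2 * B))).
        assert (Hm0 : 0 < m) by (unfold m; apply Rmin_glb_lt; [lra| apply Rdiv_lt_0_compat; lra]).
        assert (Hm1 : m <= 1) by (unfold m; apply Rmin_l).
        assert (Hm2 : m * (1 + 2 * B) <= eta).
        { apply Rle_trans with (eta / (1 + 2 * B) * (1 + 2 * B)).
          - apply Rmult_le_compat_r; [lra| unfold m; apply Rmin_r].
          - right. field. lra. }
        destruct (Hareg (m ^ 2) ltac:(apply pow_lt; lra)) as [N HN].
        apply (Ha N). intros k Hkk.
        set (z := xs (phi k)).
        assert (Hr := HN (phi k) ltac:(specialize (Hphi k); lia)). unfold r in Hr.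
        rewrite Hxs in Hr. fold z in Hr.
        set (e := hnorm (hsub z (T z))).
        assert (He : e <= m) by (apply hnorm_sq_le; lra).
        assert (He0 : 0 <= e) by apply hnorm_pos.
        assert (Hee : e ^ 2 = hinner (hsub z (T z)) (hsub z (T z))) by apply nsq.
        assert (I1 := id1 z (T z) (T a)).
        assert (I2 := id1 z a (T a)). fold v in I2.
        assert (C1 := CS1 (hsub z (T z)) (hsub (T z) (T a))). fold e in C1.
        assert (Hn := Hne z a).
        assert (Hna : hnorm (hsub (T z) (T a)) <= hnorm (hsub z a))
          by (unfold hnorm; apply sqrt_le_1_alt; exact Hn).
        assert (HzB : hnorm (hsub z a) <= B).
        { eapply Rle_trans; [apply hnorm_le1|]. unfold B.
          assert (H := sub_bound z a). assert (H2 := Hbd (phi k)). fold z in H2. fold Mb in H2. lra. }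
        assert (HTB : hnorm (hsub (T z) (T a)) <= B) by lra.
        assert (Hpos := hnorm_pos (hsub (T z) (T a))).
        assert (P1 : e * hnorm (hsub (T z) (T a)) <= m * B) by (apply Rmult_le_compat; lra).
        assert (P2 : e ^ 2 <= m) by nra.
        assert (E3 : hinner z v = hinner (hsub z a) v + hinner a v) by (rewrite ip_sub_l; ring).
        rewrite E3.
        assert (Hmb : m / 2 + m * B <= eta) by lra.
        lra. }
      lra. }
    apply sym_eq, ip_self_eq0. assert (H := hinner_pos _ v). fold v. lra. }
  destruct (hull_point xs (2 * C + 2 * hinner p0 p0) Hbd) as [a0 Ha0].
  assert (Ta0 : T a0 = a0) by (apply (Hdemi (fun k => k)); [intro k; lia| exact Ha0]).
  exists a0. split; [exact Ta0|].
  intro y. change (Un_cv (fun n => hinner (xs n) y) (hinner a0 y)).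
  apply NNPP. intro Hncv.
  assert (Hex : exists eps, 0 < eps /\ forall N, exists n, (N <= n)%nat /\ eps <= Rabs (hinner (xs n) y - hinner a0 y)).
  { apply NNPP. intro Hn. apply Hncv. intros eps Heps. apply NNPP. intro Hn2. apply Hn. exists eps. split; [exact Heps|].
    intro N. apply NNPP. intro Hn3. apply Hn2. exists N. intros n Hn4. unfold R_dist.
    apply Rnot_le_lt. intro Hle. apply Hn3. exists n. auto. }
  destruct Hex as [eps [Heps Hinf]].
  assert (Hw : exists w, forall N, exists n, (N <= n)%nat /\ hinner a0 w + eps <= hinner (xs n) w).
  { destruct (classic (forall N, exists n, (N <= n)%nat /\ hinner a0 y + eps <= hinner (xs n) y)) as [Hc|Hc].
    - exists y. exact Hc.
    - exists (hopp y). apply not_all_ex_not in Hc. destruct Hc as [N0 HN0].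
      intro N. destruct (Hinf (Nat.max N N0)) as [n [Hn Habs]]. exists n. split; [lia|].
      rewrite !ip_opp_r.
      destruct (Rle_dec (hinner a0 y + eps) (hinner (xs n) y)) as [Hle|Hle].
      + exfalso. apply HN0. exists n. split; [lia| exact Hle].
      + unfold Rabs in Habs. destruct (Rcase_abs (hinner (xs n) y - hinner a0 y)); lra. }
  destruct Hw as [w Hw].
  set (phi := fun k => epsilon (inhabits 0%nat) (fun n => (k <= n)%nat /\ hinner a0 w + eps <= hinner (xs n) w)).
  assert (Hphi : forall k, (k <= phi k)%nat /\ hinner a0 w + eps <= hinner (xs (phi k)) w)
    by (intro k; apply (epsilon_spec (inhabits 0%nat) (fun n => (k <= n)%nat /\ hinner a0 w + eps <= hinner (xs n) w)), Hw).
  destruct (hull_point (fun k => xs (phi k)) (2 * C + 2 * hinner p0 p0) (fun k => Hbd (phi k))) as [a1 Ha1].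
  assert (Ta1 : T a1 = a1) by (apply (Hdemi phi); [intro k; apply Hphi| exact Ha1]).
  assert (Hw1 : hinner a0 w + eps <= hinner a1 w).
  { assert (H : hinner a1 (hopp w) <= - (hinner a0 w + eps)).
    { apply (Ha1 0%nat). intros k _. rewrite ip_opp_r. assert (H := proj2 (Hphi k)). lra. }
    rewrite ip_opp_r in H. lra. }
  destruct (Hlimpq a0 a1 Ta0 Ta1) as [L HL].
  assert (E0 := hull_cons xs (fun k => k) (hsub a0 a1) L a0 (fun k => le_n k) HL Ha0).
  assert (E1 := hull_cons xs phi (hsub a0 a1) L a1 (fun k => proj1 (Hphi k)) HL Ha1).
  assert (Heq : a0 = a1).
  { apply ip_self_eq0. rewrite ip_sub_l. lra. }
  rewrite Heq in Hw1. lra.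
Qed.

Theorem mainTheorem16 (X : Hilbert) (mu omega beta : R)
  (f : X -> R) (gradf : X -> X) (g : X -> ERext) (gamma : R) (x0 : X) :
  mu >= omega -> omega >= 0 -> beta > 0 ->
  strongly_convex mu f ->
  is_frechet_gradient f gradf ->
  lipschitz beta gradf ->
  proper_fun g -> lsc g -> hypoconvex omega g ->
  (exists z, is_argmin_sum f g z) ->
  0 < gamma < 2 / (beta + 2 * mu) ->
  let delta := (1 - gamma * mu) / (1 - gamma * omega) in
  let T := fb_op gamma g gradf in
  (forall x, T x = x <-> is_argmin_sum f g x) /\
  exists xbar, is_argmin_sum f g xbar /\
    weak_cv (fun n => Nat.iter n T x0) xbar /\
    (mu > omega ->
       (forall z, is_argmin_sum f g z <-> z = xbar) /\
       strong_cv (fun n => Nat.iter n T x0) xbar /\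
       delta < 1 /\
       forall n, hnorm (hsub (Nat.iter n T x0) xbar) <= delta ^ n * hnorm (hsub x0 xbar)).
Proof.
  intros Hmu Hom Hb Hs Hfr Hl Hp Hlsc Hh [z Hz] Hgam delta T.
  assert (HS : setting mu omega beta f gradf g gamma) by (repeat split; assumption || apply Hgam).
  destruct (gam_facts mu omega beta gamma Hmu Hom Hb Hgam) as (G1 & G2 & G3).
  assert (Hfix : forall x, T x = x <-> is_argmin_sum f g x) by (intro x; apply (fix_iff _ _ _ _ _ _ _ HS)).
  split; [exact Hfix|].
  destruct (Rgt_dec mu omega) as [Hgt|Hngt].
  -
    assert (Tz : T z = z) by (apply Hfix; exact Hz).
    assert (Hd0 : 0 <= delta) by (unfold delta; apply Rmult_le_pos; [lra| left; apply Rinv_0_lt_compat; lra]).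
    assert (Hd1 : delta < 1).
    { unfold delta. apply Rmult_lt_reg_r with (1 - gamma * omega); [lra|].
      unfold Rdiv. rewrite Rmult_assoc, Rinv_l, Rmult_1_r by lra. nra. }
    assert (Hc : forall x y, hnorm (hsub (T x) (T y)) <= delta * hnorm (hsub x y))
      by (intros x y; apply (T_contr _ _ _ _ _ _ _ HS)).
    assert (Hrate : forall n, hnorm (hsub (Nat.iter n T x0) z) <= delta ^ n * hnorm (hsub x0 z)).
    { induction n as [|n IH].
      - simpl. lra.
      - change (Nat.iter (S n) T x0) with (T (Nat.iter n T x0)).
        assert (H := Hc (Nat.iter n T x0) z). rewrite Tz in H.
        simpl. assert (delta * hnorm (hsub (Nat.iter n T x0) z) <= delta * (delta ^ n * hnorm (hsub x0 z)))
          by (apply Rmult_le_compat_l; lra).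
        lra. }
    assert (Hstrong : strong_cv (fun n => Nat.iter n T x0) z).
    { intros e He. 
      assert (Hn0 := hnorm_pos (hsub x0 z)).
      destruct (pow_lt_1_zero delta ltac:(rewrite Rabs_pos_eq; lra) (e / (hnorm (hsub x0 z) + 1)) ltac:(apply Rdiv_lt_0_compat; lra)) as [N HN].
      exists N. intros n Hn. specialize (HN n Hn). rewrite Rabs_pos_eq in HN by (apply pow_le; lra).
      unfold R_dist. rewrite Rminus_0_r, Rabs_pos_eq by apply hnorm_pos.
      eapply Rle_lt_trans; [apply Hrate|].
      apply Rle_lt_trans with (e / (hnorm (hsub x0 z) + 1) * hnorm (hsub x0 z)).
      - apply Rmult_le_compat_r; lra.
      - assert (e / (hnorm (hsub x0 z) + 1) * hnorm (hsub x0 z) = e * (hnorm (hsub x0 z) / (hnorm (hsub x0 z) + 1))) by (field; lra).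
        assert (hnorm (hsub x0 z) / (hnorm (hsub x0 z) + 1) < 1).
        { apply Rmult_lt_reg_r with (hnorm (hsub x0 z) + 1); [lra|].
          unfold Rdiv; rewrite Rmult_assoc, Rinv_l by lra. lra. }
        nra. }
    exists z. split; [exact Hz|]. split.
    + intro y. intros e He.
      assert (Hy := hnorm_pos y).
      destruct (Hstrong (e / (hnorm y + 1)) ltac:(apply Rdiv_lt_0_compat; lra)) as [N HN].
      exists N. intros n Hn. specialize (HN n Hn). unfold R_dist in *.
      rewrite Rminus_0_r, Rabs_pos_eq in HN by apply hnorm_pos.
      assert (E : hinner (Nat.iter n T x0) y - hinner z y = hinner (hsub (Nat.iter n T x0) z) y) by (rewrite ip_sub_l; ring).
      rewrite E. eapply Rle_lt_trans; [apply CS|].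
      apply Rle_lt_trans with (e / (hnorm y + 1) * hnorm y).
      * apply Rmult_le_compat_r; lra.
      * assert (e / (hnorm y + 1) * hnorm y = e * (hnorm y / (hnorm y + 1))) by (field; lra).
        assert (hnorm y / (hnorm y + 1) < 1).
        { apply Rmult_lt_reg_r with (hnorm y + 1); [lra|].
          unfold Rdiv; rewrite Rmult_assoc, Rinv_l by lra. lra. }
        nra.
    + intros _. split; [|split; [exact Hstrong| split; [exact Hd1| exact Hrate]]].
      intro z'. split; [|intros ->; exact Hz].
      intro Hz'. assert (Tz' : T z' = z') by (apply Hfix; exact Hz').
      assert (H := Hc z' z). rewrite Tz, Tz' in H.
      assert (Hn := hnorm_pos (hsub z' z)).
      assert (H0 : hnorm (hsub z' z) = 0) by nra.
      apply ip_self_eq0. rewrite <- nsq, H0. ring.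
  - assert (Heq : omega = mu) by lra. subst omega.
    set (kappa := 1 - gamma * beta / (2 * (1 - gamma * mu))).
    assert (Hk : 0 < kappa).
    { unfold kappa. assert (gamma * beta / (2 * (1 - gamma * mu)) < 1).
      { apply Rmult_lt_reg_r with (2 * (1 - gamma * mu)); [lra|].
        unfold Rdiv; rewrite Rmult_assoc, Rinv_l by lra. lra. }
      lra. }
    assert (Tz : T z = z) by (apply Hfix; exact Hz).
    destruct (weak_fejer T kappa x0 z Hk (T_avg _ _ _ _ _ _ HS) Tz) as [xbar [Tx Hw]].
    exists xbar. split; [apply Hfix; exact Tx|]. split; [exact Hw|].
    intro Hc. lra.
Qed.
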